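(* Let $\Omega\subset\mathbb{R}^3$ be open, let $x\in\Omega$ and $0<r<\operatorname{dist}(x,\partial\Omega)$. Let $u\in C^2(\Omega)^3$ satisfy $\nabla\cdot u=0$ in $\Omega$, let $v\in\mathbb{R}^3$ be a constant vector, and let $p$ be a (classical) solution of $$-\Delta p=\nabla\cdot(u\cdot\nabla u)=\sum_{i,j=1}^3\partial_i\partial_j(u_iu_j)\quad\text{in }\Omega.$$ Then $$\partial_r\Big\{\overline{p}(x,r)+\fint_{|\xi|=1}\big|\xi\cdot(u(x+r\xi)-v)\big|^2\,dS(\xi)\Big\}=-\frac1r\fint_{|\xi|=1}\Big[3\big|\xi\cdot(u(x+r\xi)-v)\big|^2-\big|u(x+r\xi)-v\big|^2\Big]dS(\xi).$$
   Context: For a function $f$, $\overline{f}(x,r)=\frac{1}{4\pi r^2}\int_{|x-y|=r}f(y)\,dS(y)=\fint_{|\xi|=1}f(x+r\xi)\,dS(\xi)$ denotes the spherical average, where $\fint$ denotes the normalized integral (integral divided by the area of the unit sphere $\mathbb{S}^2$). *)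

(* Defs.v *)
From Stdlib Require Import Reals.
From Coquelicot Require Import Coquelicot.
Open Scope R_scope.

Definition R3 : Type := (R * R * R)%type.

Inductive idx := I1 | I2 | I3.

Definition coord (x : R3) (i : idx) : R :=
  match i with
  | I1 => fst (fst x)
  | I2 => snd (fst x)
  | I3 => snd x
  end.

Definition sum3 (f : idx -> R) : R := f I1 + f I2 + f I3.

Definition mk3 (a b c : R) : R3 := (a, b, c).
Definition vadd (x y : R3) : R3 :=
  mk3 (coord x I1 + coord y I1) (coord x I2 + coord y I2) (coord x I3 + coord y I3).
Definition vsub (x y : R3) : R3 :=
  mk3 (coord x I1 - coord y I1) (coord x I2 - coord y I2) (coord x I3 - coord y I3).
Definition vscale (a : R) (x : R3) : R3 :=
  mk3 (a * coord x I1) (a * coord x I2) (a * coord x I3).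
Definition dot (x y : R3) : R := sum3 (fun i => coord x i * coord y i).
Definition nsq (x : R3) : R := dot x x.
Definition enorm (x : R3) : R := sqrt (nsq x).
Definition edist (x y : R3) : R := enorm (vsub x y).

Definition evec (i : idx) : R3 :=
  match i with
  | I1 => mk3 1 0 0
  | I2 => mk3 0 1 0
  | I3 => mk3 0 0 1
  end.

Definition partial (i : idx) (f : R3 -> R) (y : R3) : R :=
  Derive (fun t => f (vadd y (vscale t (evec i)))) 0.

Definition C2_on (Om : R3 -> Prop) (f : R3 -> R) : Prop :=
  forall y, Om y ->
    continuous f y /\
    (forall i, ex_derive (fun t => f (vadd y (vscale t (evec i)))) 0
               /\ continuous (partial i f) y) /\
    (forall i j, ex_derive (fun t => partial j f (vadd y (vscale t (evec i)))) 0
               /\ continuous (partial i (partial j f)) y).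

Definition interior (Om : R3 -> Prop) (y : R3) : Prop :=
  exists eps, 0 < eps /\ forall z, edist z y < eps -> Om z.
Definition closure (Om : R3 -> Prop) (y : R3) : Prop :=
  forall eps, 0 < eps -> exists z, Om z /\ edist z y < eps.
Definition boundary (Om : R3 -> Prop) (y : R3) : Prop :=
  closure Om y /\ ~ interior Om y.

Definition sph (th ph : R) : R3 := mk3 (sin th * cos ph) (sin th * sin ph) (cos th).

(* normalized surface integral over the unit sphere S^2:
   (1/(4π)) ∫_{S^2} g dS, with dS = sin θ dφ dθ *)
Definition sph_avg (g : R3 -> R) : R :=
  / (4 * PI) *
  RInt (fun th => RInt (fun ph => g (sph th ph) * sin th) 0 (2 * PI)) 0 PI.

Definition sbar (f : R3 -> R) (x : R3) (r : R) : R :=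
  sph_avg (fun xi => f (vadd x (vscale r xi))).

(* Main.v *)
Require Import Defs.
From Stdlib Require Import Reals.
From Coquelicot Require Import Coquelicot.
From Stdlib Require Import Lra Psatz Nsatz Classical ClassicalEpsilon.
Open Scope R_scope.

Lemma eta3 (z : R3) : mk3 (coord z I1) (coord z I2) (coord z I3) = z.
Proof. destruct z as [[a b] c]; reflexivity. Qed.

Lemma ball3 (y z : R3) (e : R) :
  Rabs (coord z I1 - coord y I1) < e -> Rabs (coord z I2 - coord y I2) < e ->
  Rabs (coord z I3 - coord y I3) < e -> @ball (prod_UniformSpace (prod_UniformSpace R_UniformSpace R_UniformSpace) R_UniformSpace) y e z.
Proof.
  destruct y as [[a b] c]; destruct z as [[a' b'] c']; simpl; intros.
  split; [split|]; assumption.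
Qed.

Definition near3 (y z : R3) (e : R) : Prop := forall i, Rabs (coord z i - coord y i) < e.

Lemma open_nbhd (Om : R3 -> Prop) y : open Om -> Om y ->
  exists e, 0 < e /\ forall z, near3 y z e -> Om z.
Proof.
  intros H Hy. destruct (H y Hy) as [e He]. exists e. split. apply cond_pos.
  intros z h. apply He. apply ball3; apply h.
Qed.

Lemma cont_nbhd (g : R3 -> R) y : continuous g y ->
  forall eps, 0 < eps -> exists d, 0 < d /\ forall z, near3 y z d -> Rabs (g z - g y) < eps.
Proof.
  intros H eps Heps. assert (H2 := H (ball (g y) (mkposreal eps Heps)) (locally_ball _ _)).
  destruct H2 as [d Hd]. exists d. split. apply cond_pos. intros z hz.
  apply (Hd z (ball3 _ _ _ (hz I1) (hz I2) (hz I3))).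
Qed.

Definition setc (z : R3) (i : idx) (t : R) : R3 :=
  match i with
  | I1 => mk3 t (coord z I2) (coord z I3)
  | I2 => mk3 (coord z I1) t (coord z I3)
  | I3 => mk3 (coord z I1) (coord z I2) t
  end.

Lemma coord_setc z i t j : coord (setc z i t) j = match i, j with
  | I1, I1 | I2, I2 | I3, I3 => t | _, _ => coord z j end.
Proof. destruct i, j; reflexivity. Qed.

Lemma setc_line z i a t : vadd (setc z i a) (vscale t (evec i)) = setc z i (a + t).
Proof. destruct i; unfold vadd, vscale, setc, mk3; simpl; f_equal; try f_equal; ring. Qed.

Definition PD (Om : R3 -> Prop) (f : R3 -> R) : Prop :=
  forall z, Om z -> forall i, ex_derive (fun t => f (vadd z (vscale t (evec i)))) 0.

Lemma is_derive_setc Om f z i a : PD Om f -> Om (setc z i a) ->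
  is_derive (fun t => f (setc z i t)) a (partial i f (setc z i a)).
Proof.
  intros HP Ha. assert (H := Derive_correct _ _ (HP _ Ha i)).
  unfold partial.
  assert (Hc : is_derive (fun t => f (vadd (setc z i a) (vscale (t - a) (evec i)))) a
     (Derive (fun t : R => f (vadd (setc z i a) (vscale t (evec i)))) 0)).
  { replace (Derive (fun t : R => f (vadd (setc z i a) (vscale t (evec i)))) 0) with
      (scal 1 (Derive (fun t : R => f (vadd (setc z i a) (vscale t (evec i)))) 0)).
    2:{ exact (scal_one _). }
    apply (is_derive_comp (fun t => f (vadd (setc z i a) (vscale t (evec i)))) (fun t => t - a)).
    replace (a - a) with 0 by ring. exact H.
    auto_derive; auto; ring. }
  eapply is_derive_ext. 2: exact Hc. intro t. simpl. rewrite setc_line. f_equal. f_equal. ring.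
Qed.

Lemma mvt_setc Om f z i a b : PD Om f ->
  (forall c, Rmin a b <= c <= Rmax a b -> Om (setc z i c)) ->
  exists c, Rmin a b <= c <= Rmax a b /\
   f (setc z i b) - f (setc z i a) = partial i f (setc z i c) * (b - a).
Proof.
  intros HP Hin.
  apply (MVT_gen (fun t => f (setc z i t)) a b (fun c => partial i f (setc z i c))).
  - intros c hc. apply is_derive_setc with Om; auto. apply Hin; lra.
  - intros c hc. apply continuity_pt_filterlim.
    apply (ex_derive_continuous (fun t => f (setc z i t))).
    eexists. apply is_derive_setc with Om; auto.
Qed.

Lemma between_abs a b c : Rmin a b <= c <= Rmax a b -> Rabs (c - a) <= Rabs (b - a).
Proof. unfold Rmin, Rmax, Rabs; destruct (Rle_dec a b); intros [h1 h2];
  repeat destruct Rcase_abs; lra. Qed.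

Lemma Rabs_self0 a : Rabs (a - a) = 0.
Proof. replace (a - a) with 0 by ring. apply Rabs_R0. Qed.

Lemma err_bound (d e x : R) : Rabs d < e -> Rabs (d * x) <= e * Rabs x.
Proof. intros h. rewrite Rabs_mult. apply Rmult_le_compat_r. apply Rabs_pos. lra. Qed.

Lemma frechet Om f y : open Om -> PD Om f -> Om y -> (forall i, continuous (partial i f) y) ->
  forall eps, 0 < eps -> exists d, 0 < d /\ forall z, near3 y z d ->
   Rabs (f z - f y - sum3 (fun i => partial i f y * (coord z i - coord y i)))
    <= eps * sum3 (fun i => Rabs (coord z i - coord y i)).
Proof.
  intros HO HP Hy Hc eps Heps.
  destruct (open_nbhd Om y HO Hy) as [e0 [He0 Hin]].
  destruct (cont_nbhd _ _ (Hc I1) eps Heps) as [d1 [Hd1 C1]].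
  destruct (cont_nbhd _ _ (Hc I2) eps Heps) as [d2 [Hd2 C2]].
  destruct (cont_nbhd _ _ (Hc I3) eps Heps) as [d3 [Hd3 C3]].
  set (d := Rmin e0 (Rmin d1 (Rmin d2 d3))).
  assert (hd0 : d <= e0) by (unfold d; apply Rmin_l).
  assert (hd1 : d <= d1) by (unfold d; eapply Rle_trans; [apply Rmin_r|apply Rmin_l]).
  assert (hd2 : d <= d2) by (unfold d; eapply Rle_trans; [apply Rmin_r|]; eapply Rle_trans; [apply Rmin_r|apply Rmin_l]).
  assert (hd3 : d <= d3) by (unfold d; eapply Rle_trans; [apply Rmin_r|]; eapply Rle_trans; [apply Rmin_r|apply Rmin_r]).
  exists d. split.
  { unfold d. repeat apply Rmin_pos; auto. }
  intros z hz.
  assert (h1 := hz I1); assert (h2 := hz I2); assert (h3 := hz I3).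
  set (p1 := setc y I1 (coord z I1)).
  set (p2 := setc p1 I2 (coord z I2)).
  assert (E0 : setc y I1 (coord y I1) = y) by (apply eta3).
  assert (E1 : setc p1 I2 (coord y I2) = p1) by (unfold p1; reflexivity).
  assert (E2 : setc p2 I3 (coord y I3) = p2) by (unfold p2, p1; reflexivity).
  assert (E3 : setc p2 I3 (coord z I3) = z) by (unfold p2, p1; simpl; apply eta3).
  destruct (mvt_setc Om f y I1 (coord y I1) (coord z I1) HP) as [c1 [hc1 M1]].
  { intros c hc. apply Hin. intro j. assert (HH := between_abs _ _ _ hc).
    destruct j; unfold p2, p1; repeat rewrite coord_setc; cbv iota beta; rewrite ?Rabs_self0; lra. }
  destruct (mvt_setc Om f p1 I2 (coord y I2) (coord z I2) HP) as [c2 [hc2 M2]].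
  { intros c hc. apply Hin. intro j. assert (HH := between_abs _ _ _ hc).
    destruct j; unfold p2, p1; repeat rewrite coord_setc; cbv iota beta; rewrite ?Rabs_self0; lra. }
  destruct (mvt_setc Om f p2 I3 (coord y I3) (coord z I3) HP) as [c3 [hc3 M3]].
  { intros c hc. apply Hin. intro j. assert (HH := between_abs _ _ _ hc).
    destruct j; unfold p2, p1; repeat rewrite coord_setc; cbv iota beta; rewrite ?Rabs_self0; lra. }
  rewrite E0 in M1. rewrite E1 in M2. rewrite E2, E3 in M3. fold p1 in M1. fold p2 in M2.
  assert (D1 : Rabs (partial I1 f (setc y I1 c1) - partial I1 f y) < eps).
  { apply C1. intro j. assert (HH := between_abs _ _ _ hc1).
    destruct j; unfold p2, p1; repeat rewrite coord_setc; cbv iota beta; rewrite ?Rabs_self0; lra. }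
  assert (D2 : Rabs (partial I2 f (setc p1 I2 c2) - partial I2 f y) < eps).
  { apply C2. intro j. assert (HH := between_abs _ _ _ hc2).
    destruct j; unfold p2, p1; repeat rewrite coord_setc; cbv iota beta; rewrite ?Rabs_self0; lra. }
  assert (D3 : Rabs (partial I3 f (setc p2 I3 c3) - partial I3 f y) < eps).
  { apply C3. intro j. assert (HH := between_abs _ _ _ hc3).
    destruct j; unfold p2, p1; repeat rewrite coord_setc; cbv iota beta; rewrite ?Rabs_self0; lra. }
  replace (f z - f y - sum3 (fun i => partial i f y * (coord z i - coord y i))) with
    ((partial I1 f (setc y I1 c1) - partial I1 f y) * (coord z I1 - coord y I1) +
     (partial I2 f (setc p1 I2 c2) - partial I2 f y) * (coord z I2 - coord y I2) +
     (partial I3 f (setc p2 I3 c3) - partial I3 f y) * (coord z I3 - coord y I3)).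
  2:{ unfold sum3. lra. }
  unfold sum3.
  assert (B1 := err_bound _ _ (coord z I1 - coord y I1) D1).
  assert (B2 := err_bound _ _ (coord z I2 - coord y I2) D2).
  assert (B3 := err_bound _ _ (coord z I3 - coord y I3) D3).
  eapply Rle_trans. apply Rabs_triang. eapply Rle_trans. apply Rplus_le_compat_r. apply Rabs_triang.
  lra.
Qed.

Lemma chain Om f (g : R -> R3) (dg : idx -> R) t :
  open Om -> PD Om f -> Om (g t) -> (forall i, continuous (partial i f) (g t)) ->
  (forall i, is_derive (fun s => coord (g s) i) t (dg i)) ->
  is_derive (fun s => f (g s)) t (sum3 (fun i => partial i f (g t) * dg i)).
Proof.
  intros HO HP Hy Hc Hd.
  apply is_derive_Reals. intros eps Heps.
  set (y := g t).
  set (M := 1 + (Rabs (dg I1) + Rabs (dg I2) + Rabs (dg I3)) +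
     (Rabs (partial I1 f y) + Rabs (partial I2 f y) + Rabs (partial I3 f y))).
  assert (HM : 1 <= M).
  { unfold M. assert (h := Rabs_pos (dg I1)). assert (h2 := Rabs_pos (dg I2)). assert (h3 := Rabs_pos (dg I3)).
    assert (h4 := Rabs_pos (partial I1 f y)). assert (h5 := Rabs_pos (partial I2 f y)). assert (h6 := Rabs_pos (partial I3 f y)). lra. }
  assert (He1 : 0 < eps / (6 * M)) by (apply Rdiv_lt_0_compat; lra).
  destruct (frechet Om f y HO HP Hy Hc _ He1) as [df [Hdf Fr]].
  set (e2 := Rmin 1 (eps / (4 * M))).
  assert (He2 : 0 < e2) by (unfold e2; apply Rmin_pos; [lra| apply Rdiv_lt_0_compat; lra]).
  assert (Hd' : forall i, exists d : posreal, forall h, h <> 0 -> Rabs h < d ->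
     Rabs ((coord (g (t + h)) i - coord (g t) i) / h - dg i) < e2).
  { intro i. destruct (proj1 (is_derive_Reals _ _ _) (Hd i) e2 He2) as [d Hd2]. exists d. exact Hd2. }
  destruct (Hd' I1) as [d1 D1]. destruct (Hd' I2) as [d2 D2]. destruct (Hd' I3) as [d3 D3].
  assert (Hdm : 0 < df / M) by (apply Rdiv_lt_0_compat; lra).
  exists (mkposreal _ (Rmin_pos _ _ (Rmin_pos _ _ (cond_pos d1) (cond_pos d2))
                                (Rmin_pos _ _ (cond_pos d3) Hdm))).
  intros h Hh0 Hh. simpl in Hh.
  assert (hh1 : Rabs h < d1). { eapply Rlt_le_trans. exact Hh. eapply Rle_trans; apply Rmin_l. }
  assert (hh2 : Rabs h < d2). { eapply Rlt_le_trans. exact Hh. eapply Rle_trans. apply Rmin_l. apply Rmin_r. }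
  assert (hh3 : Rabs h < d3). { eapply Rlt_le_trans. exact Hh. eapply Rle_trans. apply Rmin_r. apply Rmin_l. }
  assert (hh4 : Rabs h < df / M). { eapply Rlt_le_trans. exact Hh. eapply Rle_trans. apply Rmin_r. apply Rmin_r. }
  specialize (D1 h Hh0 hh1). specialize (D2 h Hh0 hh2). specialize (D3 h Hh0 hh3).
  set (z := g (t + h)) in *. fold y in D1, D2, D3.
  set (q1 := (coord z I1 - coord y I1) / h) in *.
  set (q2 := (coord z I2 - coord y I2) / h) in *.
  set (q3 := (coord z I3 - coord y I3) / h) in *.
  assert (Hq : forall i q, Rabs (q - dg i) < e2 -> Rabs q <= Rabs (dg i) + 1).
  { intros i q hq. assert (e2 <= 1) by (unfold e2; apply Rmin_l).
    assert (Rabs q <= Rabs (q - dg i) + Rabs (dg i)).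
    { replace q with ((q - dg i) + dg i) at 1 by ring. apply Rabs_triang. }
    lra. }
  assert (Q1 := Hq _ _ D1). assert (Q2 := Hq _ _ D2). assert (Q3 := Hq _ _ D3).
  assert (B : forall i, Rabs (dg i) <= M - 1).
  { intro i. unfold M. assert (k1 := Rabs_pos (dg I1)). assert (k2 := Rabs_pos (dg I2)). assert (k3 := Rabs_pos (dg I3)).
    assert (k4 := Rabs_pos (partial I1 f y)). assert (k5 := Rabs_pos (partial I2 f y)). assert (k6 := Rabs_pos (partial I3 f y)).
    destruct i; lra. }
  assert (Qb1 : Rabs q1 <= M) by (assert (B1 := B I1); lra).
  assert (Qb2 : Rabs q2 <= M) by (assert (B1 := B I2); lra).
  assert (Qb3 : Rabs q3 <= M) by (assert (B1 := B I3); lra).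
  assert (Zi : forall q w, q = w / h -> Rabs q <= M -> Rabs w < df).
  { intros q w Hq1 Hq2. replace w with (q * h) by (rewrite Hq1; field; auto).
    rewrite Rabs_mult. apply Rle_lt_trans with (M * Rabs h).
    apply Rmult_le_compat_r. apply Rabs_pos. auto.
    apply Rmult_lt_reg_l with (/ M). apply Rinv_0_lt_compat; lra.
    replace (/ M * (M * Rabs h)) with (Rabs h) by (field; lra).
    replace (/ M * df) with (df / M) by (unfold Rdiv; ring). exact hh4. }
  assert (Hnear : near3 y z df).
  { intro i; destruct i; [apply (Zi q1)|apply (Zi q2)|apply (Zi q3)]; auto. }
  specialize (Fr z Hnear).
  unfold sum3 in Fr |- *.
  set (E := f z - f y - (partial I1 f y * (coord z I1 - coord y I1) + partial I2 f y * (coord z I2 - coord y I2) +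
        partial I3 f y * (coord z I3 - coord y I3))) in Fr.
  assert (Ew : forall w q, q = w / h -> w = q * h) by (intros w q e; rewrite e; field; auto).
  assert (W1 := Ew _ q1 eq_refl). assert (W2 := Ew _ q2 eq_refl). assert (W3 := Ew _ q3 eq_refl).
  replace ((f z - f y) / h -
    (partial I1 f y * dg I1 + partial I2 f y * dg I2 + partial I3 f y * dg I3)) with
    (E / h + (partial I1 f y * (q1 - dg I1) + partial I2 f y * (q2 - dg I2) + partial I3 f y * (q3 - dg I3))).
  2:{ unfold E. rewrite W1, W2, W3. field. auto. }
  rewrite W1, W2, W3 in Fr. rewrite !Rabs_mult in Fr.
  assert (EB : Rabs (E / h) <= eps / 2).
  { unfold Rdiv at 1. rewrite Rabs_mult, Rabs_inv.
    apply Rmult_le_reg_r with (Rabs h). apply Rabs_pos_lt; auto.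
    replace (Rabs E * / Rabs h * Rabs h) with (Rabs E) by (field; apply Rabs_no_R0; auto).
    eapply Rle_trans. exact Fr.
    replace (eps / (6 * M) * (Rabs q1 * Rabs h + Rabs q2 * Rabs h + Rabs q3 * Rabs h)) with
      ((eps / (6 * M)) * (Rabs q1 + Rabs q2 + Rabs q3) * Rabs h) by ring.
    apply Rmult_le_compat_r. apply Rabs_pos.
    apply Rle_trans with (eps / (6 * M) * (3 * M)).
    apply Rmult_le_compat_l. lra. lra.
    right. field. lra. }
  assert (e2b : e2 <= eps / (4 * M)) by (unfold e2; apply Rmin_r).
  assert (T : forall a b, Rabs b < e2 -> Rabs (a * b) <= Rabs a * (eps / (4 * M))).
  { intros a b hb. rewrite Rabs_mult. apply Rmult_le_compat_l. apply Rabs_pos. lra. }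
  assert (T1 := T (partial I1 f y) _ D1). assert (T2 := T (partial I2 f y) _ D2). assert (T3 := T (partial I3 f y) _ D3).
  assert (SB : Rabs (partial I1 f y * (q1 - dg I1) + partial I2 f y * (q2 - dg I2) + partial I3 f y * (q3 - dg I3)) <= eps / 4).
  { eapply Rle_trans. apply Rabs_triang. eapply Rle_trans. apply Rplus_le_compat_r. apply Rabs_triang.
    apply Rle_trans with ((Rabs (partial I1 f y) + Rabs (partial I2 f y) + Rabs (partial I3 f y)) * (eps / (4 * M))).
    lra.
    apply Rle_trans with (M * (eps / (4 * M))).
    apply Rmult_le_compat_r. apply Rlt_le, Rdiv_lt_0_compat; lra.
    unfold M. assert (k1 := Rabs_pos (dg I1)). assert (k2 := Rabs_pos (dg I2)). assert (k3 := Rabs_pos (dg I3)). lra.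
    right. field. lra. }
  eapply Rle_lt_trans. apply Rabs_triang. lra.
Qed.

Lemma cont_mk3 {U : UniformSpace} (f1 f2 f3 : U -> R) x :
  continuous f1 x -> continuous f2 x -> continuous f3 x ->
  continuous (fun y => mk3 (f1 y) (f2 y) (f3 y)) x.
Proof.
  intros H1 H2 H3 P [e He].
  assert (L1 := H1 _ (locally_ball (f1 x) e)).
  assert (L2 := H2 _ (locally_ball (f2 x) e)).
  assert (L3 := H3 _ (locally_ball (f3 x) e)).
  unfold filtermap in *.
  generalize (filter_and _ _ (filter_and _ _ L1 L2) L3).
  apply filter_imp. intros y [[h1 h2] h3]. apply He. split; [split|]; assumption.
Qed.

Lemma cont_coord (q : R3) i : continuous (fun z : R3 => coord z i) q.
Proof.
  intros P [e He]. exists e. intros z hz. apply He.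
  destruct q as [[a b] c]; destruct z as [[a' b'] c']; destruct hz as [[h1 h2] h3].
  destruct i; assumption.
Qed.

Lemma near3_ball (y z : R3) e : near3 y z e -> Rabs (coord z I1 - coord y I1) < e.
Proof. intro h; apply h. Qed.

Lemma cont_const {U : UniformSpace} (c : R) (x : U) : continuous (fun _ => c) x.
Proof. apply continuous_const. Qed.

Lemma RInt_cont2 (k : R -> R -> R -> R) a b s0 t0 eta :
  a <= b -> 0 < eta ->
  (forall s t u, Rabs (s - s0) < eta -> Rabs (t - t0) < eta -> a <= u <= b ->
     continuous (fun q : R3 => k (coord q I1) (coord q I2) (coord q I3)) (mk3 s t u)) ->
  continuity_2d_pt (fun s t => RInt (k s t) a b) s0 t0.
Proof.
  intros Hab Heta Hc eps.
  set (e1 := eps / (2 * (b - a + 1))).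
  assert (He1 : 0 < e1) by (unfold e1; apply Rdiv_lt_0_compat; [apply cond_pos| lra]).
  assert (Hs0 : Rabs (s0 - s0) < eta) by (rewrite Rabs_self0; lra).
  assert (Ht0 : Rabs (t0 - t0) < eta) by (rewrite Rabs_self0; lra).
  assert (D : forall u, {d : posreal | a <= u <= b -> forall z, near3 (mk3 s0 t0 u) z d ->
      Rabs (k (coord z I1) (coord z I2) (coord z I3) - k s0 t0 u) < e1}).
  { intro u. apply constructive_indefinite_description.
    destruct (classic (a <= u <= b)) as [hu|hu].
    - destruct (cont_nbhd _ _ (Hc s0 t0 u Hs0 Ht0 hu) e1 He1) as [d [Hd Hd2]].
      exists (mkposreal d Hd). intros _ z hz. exact (Hd2 z hz).
    - exists (mkposreal 1 Rlt_0_1). intro; contradiction. }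
  set (delta := fun u => proj1_sig (D u)).
  destruct (compactness_value_1d a b delta) as [d Hd].
  assert (Hdm : 0 < Rmin d eta) by (apply Rmin_pos; [apply cond_pos|lra]).
  exists (mkposreal _ Hdm). intros s t hs ht. simpl in hs, ht.
  assert (hs1 : Rabs (s - s0) < d) by (eapply Rlt_le_trans; [exact hs| apply Rmin_l]).
  assert (ht1 : Rabs (t - t0) < d) by (eapply Rlt_le_trans; [exact ht| apply Rmin_l]).
  assert (hs2 : Rabs (s - s0) < eta) by (eapply Rlt_le_trans; [exact hs| apply Rmin_r]).
  assert (ht2 : Rabs (t - t0) < eta) by (eapply Rlt_le_trans; [exact ht| apply Rmin_r]).
  assert (Cont : forall s' t', Rabs (s' - s0) < eta -> Rabs (t' - t0) < eta -> ex_RInt (k s' t') a b).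
  { intros s' t' h1 h2. apply (ex_RInt_continuous (V := R_CompleteNormedModule)). intros u hu.
    rewrite Rmin_left in hu by lra. rewrite Rmax_right in hu by lra.
    apply (continuous_comp (fun u => mk3 s' t' u) (fun q : R3 => k (coord q I1) (coord q I2) (coord q I3))).
    apply cont_mk3; [apply continuous_const|apply continuous_const|apply continuous_id].
    apply Hc; auto. }
  assert (Pt : forall u, a <= u <= b -> Rabs (k s t u - k s0 t0 u) <= 2 * e1).
  { intros u hu. apply Rnot_lt_le. intro Hlt.
    apply (Hd u hu). intros [v [hv [huv hdv]]].
    assert (P1 := proj2_sig (D v) hv (mk3 s t u)).
    assert (P2 := proj2_sig (D v) hv (mk3 s0 t0 u)).
    fold (delta v) in P1, P2. simpl in P1, P2.
    assert (N1 : near3 (mk3 s0 t0 v) (mk3 s t u) (delta v)).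
    { intro i; destruct i; simpl; lra. }
    assert (N2 : near3 (mk3 s0 t0 v) (mk3 s0 t0 u) (delta v)).
    { intro i; destruct i; simpl; rewrite ?Rabs_self0; try apply cond_pos; lra. }
    specialize (P1 N1). specialize (P2 N2).
    assert (Rabs (k s t u - k s0 t0 u) <= Rabs (k s t u - k s0 t0 v) + Rabs (k s0 t0 u - k s0 t0 v)).
    { replace (k s t u - k s0 t0 u) with ((k s t u - k s0 t0 v) - (k s0 t0 u - k s0 t0 v)) by ring.
      eapply Rle_trans. apply Rabs_triang. rewrite Rabs_Ropp. lra. }
    lra. }
  assert (E : RInt (k s t) a b - RInt (k s0 t0) a b = RInt (fun u => k s t u - k s0 t0 u) a b).
  { symmetry. apply (RInt_minus (V := R_CompleteNormedModule)); apply Cont; auto. }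
  rewrite E.
  eapply Rle_lt_trans. apply abs_RInt_le_const with (M := 2 * e1). exact Hab.
  apply (ex_RInt_minus (V := R_NormedModule)); apply Cont; auto.
  intros u hu. apply Pt; auto.
  unfold e1. apply Rle_lt_trans with (eps * ((b - a) / (b - a + 1))).
  right. field. lra.
  rewrite <- (Rmult_1_r eps) at 2. apply Rmult_lt_compat_l. apply cond_pos.
  apply Rmult_lt_reg_r with (b - a + 1). lra. unfold Rdiv. rewrite Rmult_assoc, Rinv_l; lra.
Qed.

Lemma loc_int (s s0 eta : R) : Rabs (s - s0) < eta -> locally s (fun u => Rabs (u - s0) < eta).
Proof.
  intro h. assert (He : 0 < eta - Rabs (s - s0)) by lra.
  exists (mkposreal _ He). intros u hu. simpl in hu. unfold ball in hu; simpl in hu.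
  unfold AbsRing_ball, abs, minus, plus, opp in hu; simpl in hu.
  assert (Rabs (u - s0) <= Rabs (u - s) + Rabs (s - s0)).
  { replace (u - s0) with ((u - s) + (s - s0)) by ring. apply Rabs_triang. }
  unfold Rminus in *. lra.
Qed.

Lemma cont2d_of3 (K : R3 -> R) (c s t : R) :
  continuous K (mk3 s c t) -> continuity_2d_pt (fun u v => K (mk3 u c v)) s t.
Proof.
  intro H. apply continuity_2d_pt_filterlim.
  apply (continuous_comp (fun z : R * R => mk3 (fst z) c (snd z)) K (s, t)).
  apply cont_mk3. apply continuous_fst. apply continuous_const. apply continuous_snd.
  exact H.
Qed.

Lemma cont2d_of3' (K : R3 -> R) (c s t : R) :
  continuous K (mk3 c s t) -> continuity_2d_pt (fun u v => K (mk3 c u v)) s t.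
Proof.
  intro H. apply continuity_2d_pt_filterlim.
  apply (continuous_comp (fun z : R * R => mk3 c (fst z) (snd z)) K (s, t)).
  apply cont_mk3. apply continuous_const. apply continuous_fst. apply continuous_snd.
  exact H.
Qed.

Lemma cont2d_snd (f : R -> R -> R) x y : continuity_2d_pt f x y -> continuous (fun v => f x v) y.
Proof.
  intro H. apply continuity_2d_pt_filterlim in H.
  apply (continuous_comp (fun v => (x, v)) (fun z : R * R => f (fst z) (snd z)) y).
  2: exact H.
  intros P [e He]. exists e. intros v hv. apply He. split. apply ball_center. exact hv.
Qed.

Lemma cont_of3_line (K : R3 -> R) s t u : continuous K (mk3 s t u) -> continuous (fun v => K (mk3 s t v)) u.
Proof.
  intro H. apply (continuous_comp (fun v => mk3 s t v) K u). apply cont_mk3.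
  apply continuous_const. apply continuous_const. apply continuous_id. exact H.
Qed.

Definition J (G : R -> R3 -> R) (q : R3) : R :=
  G (coord q I1) (sph (coord q I2) (coord q I3)).

Lemma contJsin G q : continuous (J G) q ->
  continuous (fun q : R3 => G (coord q I1) (sph (coord q I2) (coord q I3)) * sin (coord q I2)) q.
Proof.
  intro H. apply (continuous_mult (K := R_AbsRing)). exact H.
  apply (continuous_comp (fun q : R3 => coord q I2) sin). apply cont_coord. apply continuous_sin.
Qed.

Lemma inner_derive (G H : R -> R3 -> R) s0 eta th s :
  Rabs (s - s0) < eta ->
  (forall s th ph, Rabs (s - s0) < eta -> is_derive (fun z => G z (sph th ph)) s (H s (sph th ph))) ->
  (forall s th ph, Rabs (s - s0) < eta -> continuous (J G) (mk3 s th ph)) ->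
  (forall s th ph, Rabs (s - s0) < eta -> continuous (J H) (mk3 s th ph)) ->
  is_derive (fun z => RInt (fun ph => G z (sph th ph) * sin th) 0 (2 * PI)) s
     (RInt (fun ph => H s (sph th ph) * sin th) 0 (2 * PI)).
Proof.
  intros hs HD HG HH.
  assert (Dv : forall u ph, Rabs (u - s0) < eta ->
     is_derive (fun z => G z (sph th ph) * sin th) u (H u (sph th ph) * sin th)).
  { intros u ph hu. apply (is_derive_ext (fun z => sin th * G z (sph th ph)) (fun z => G z (sph th ph) * sin th)).
    - intro t. apply Rmult_comm.
    - rewrite (Rmult_comm (H u _)). apply is_derive_scal. apply HD; auto. }
  assert (E : RInt (fun ph => H s (sph th ph) * sin th) 0 (2 * PI) =
              RInt (fun ph => Derive (fun z => G z (sph th ph) * sin th) s) 0 (2 * PI)).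
  { apply RInt_ext. intros ph _. symmetry. apply is_derive_unique. apply Dv; auto. }
  rewrite E.
  apply (is_derive_RInt_param (fun z ph => G z (sph th ph) * sin th)).
  - generalize (loc_int _ _ _ hs). apply filter_imp. intros u hu ph _. eexists. apply Dv; auto.
  - intros ph _. apply continuity_2d_pt_ext_loc with (fun u v => H u (sph th v) * sin th).
    + assert (He : 0 < eta - Rabs (s - s0)) by lra. exists (mkposreal _ He).
      intros u v hu _. simpl in hu. symmetry. apply is_derive_unique. apply Dv.
      assert (Rabs (u - s0) <= Rabs (u - s) + Rabs (s - s0)).
      { replace (u - s0) with ((u - s) + (s - s0)) by ring. apply Rabs_triang. } lra.
    + apply (cont2d_of3 (fun q => H (coord q I1) (sph (coord q I2) (coord q I3)) * sin (coord q I2)) th s ph).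
      apply contJsin. apply HH; auto.
  - generalize (loc_int _ _ _ hs). apply filter_imp. intros u hu.
    apply (ex_RInt_continuous (V := R_CompleteNormedModule)). intros ph _.
    apply (cont_of3_line (fun q => G (coord q I1) (sph (coord q I2) (coord q I3)) * sin (coord q I2)) u th ph).
    apply contJsin. apply HG; auto.
Qed.

Lemma inner_cont (G : R -> R3 -> R) s0 eta s th :
  0 < eta -> Rabs (s - s0) < eta ->
  (forall s th ph, Rabs (s - s0) < eta -> continuous (J G) (mk3 s th ph)) ->
  continuity_2d_pt (fun u v => RInt (fun ph => G u (sph v ph) * sin v) 0 (2 * PI)) s th.
Proof.
  intros Heta hs HG.
  assert (He : 0 < eta - Rabs (s - s0)) by lra.
  apply (RInt_cont2 (fun u v ph => G u (sph v ph) * sin v) 0 (2 * PI) s th (eta - Rabs (s - s0))).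
  assert (PI_RGT_0 := PI_RGT_0); lra. exact He.
  intros u v ph hu _ _. apply contJsin. apply HG.
  assert (Rabs (u - s0) <= Rabs (u - s) + Rabs (s - s0)).
  { replace (u - s0) with ((u - s) + (s - s0)) by ring. apply Rabs_triang. } lra.
Qed.

Lemma avg_derive (G H : R -> R3 -> R) s0 eta :
  0 < eta ->
  (forall s th ph, Rabs (s - s0) < eta -> is_derive (fun z => G z (sph th ph)) s (H s (sph th ph))) ->
  (forall s th ph, Rabs (s - s0) < eta -> continuous (J G) (mk3 s th ph)) ->
  (forall s th ph, Rabs (s - s0) < eta -> continuous (J H) (mk3 s th ph)) ->
  is_derive (fun s => sph_avg (G s)) s0 (sph_avg (H s0)).
Proof.
  intros Heta HD HG HH. unfold sph_avg.
  apply is_derive_scal.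
  assert (hs0 : Rabs (s0 - s0) < eta) by (rewrite Rabs_self0; auto).
  assert (E : RInt (fun th => RInt (fun ph => H s0 (sph th ph) * sin th) 0 (2 * PI)) 0 PI =
     RInt (fun th => Derive (fun z => RInt (fun ph => G z (sph th ph) * sin th) 0 (2 * PI)) s0) 0 PI).
  { apply RInt_ext. intros th _. symmetry. apply is_derive_unique.
    apply inner_derive with s0 eta; auto. }
  rewrite E.
  apply (is_derive_RInt_param (fun z th => RInt (fun ph => G z (sph th ph) * sin th) 0 (2 * PI))).
  - generalize (loc_int _ _ _ hs0). apply filter_imp. intros u hu th _. eexists.
    apply inner_derive with s0 eta; auto.
  - intros th _. apply continuity_2d_pt_ext_loc with (fun u v => RInt (fun ph => H u (sph v ph) * sin v) 0 (2 * PI)).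
    + exists (mkposreal _ Heta). intros u v hu _. simpl in hu. symmetry. apply is_derive_unique.
      apply inner_derive with s0 eta; auto.
    + apply inner_cont with s0 eta; auto.
  - generalize (loc_int _ _ _ hs0). apply filter_imp. intros u hu.
    apply (ex_RInt_continuous (V := R_CompleteNormedModule)). intros th _.
    apply (cont2d_snd (fun u v => RInt (fun ph => G u (sph v ph) * sin v) 0 (2 * PI)) u th).
    apply inner_cont with s0 eta; auto.
Qed.

Definition C1d (Om : R3 -> Prop) (f : R3 -> R) (Df : idx -> R3 -> R) : Prop :=
  (forall z, Om z -> forall j, is_derive (fun t => f (vadd z (vscale t (evec j)))) 0 (Df j z)) /\
  (forall z, Om z -> forall j, continuous (Df j) z) /\
  (forall z, Om z -> continuous f z).

Lemma cont_plus {U : UniformSpace} (f g : U -> R) x :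
  continuous f x -> continuous g x -> continuous (fun y => f y + g y) x.
Proof. intros; apply (continuous_plus (V := R_NormedModule)); auto. Qed.
Lemma cont_mult {U : UniformSpace} (f g : U -> R) x :
  continuous f x -> continuous g x -> continuous (fun y => f y * g y) x.
Proof. intros; apply (continuous_mult (K := R_AbsRing)); auto. Qed.
Lemma cont_opp {U : UniformSpace} (f : U -> R) x :
  continuous f x -> continuous (fun y => - f y) x.
Proof. intros; apply (continuous_opp (V := R_NormedModule)); auto. Qed.
Lemma cont_minus {U : UniformSpace} (f g : U -> R) x :
  continuous f x -> continuous g x -> continuous (fun y => f y - g y) x.
Proof. intros; apply cont_plus; auto; apply cont_opp; auto. Qed.
Lemma cont_sin {U : UniformSpace} (f : U -> R) x : continuous f x -> continuous (fun y => sin (f y)) x.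
Proof. intros; apply (continuous_comp f sin); auto; apply continuous_sin. Qed.
Lemma cont_cos {U : UniformSpace} (f : U -> R) x : continuous f x -> continuous (fun y => cos (f y)) x.
Proof. intros; apply (continuous_comp f cos); auto; apply continuous_cos. Qed.
Lemma cont_cst {U : UniformSpace} (c : R) (x : U) : continuous (fun _ => c) x.
Proof. apply continuous_const. Qed.
Lemma cont_sum3 {U : UniformSpace} (f : idx -> U -> R) x :
  (forall i, continuous (f i) x) -> continuous (fun y => sum3 (fun i => f i y)) x.
Proof. intros H; unfold sum3; repeat apply cont_plus; apply H. Qed.

Lemma is_derive_plus' (f g : R -> R) x df dg :
  is_derive f x df -> is_derive g x dg -> is_derive (fun t => f t + g t) x (df + dg).
Proof. intros; apply (is_derive_plus f g); auto. Qed.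
Lemma is_derive_mult' (f g : R -> R) x df dg :
  is_derive f x df -> is_derive g x dg -> is_derive (fun t => f t * g t) x (df * g x + f x * dg).
Proof. intros; apply (is_derive_mult f g); auto. intros; apply Rmult_comm. Qed.
Lemma is_derive_opp' (f : R -> R) x df :
  is_derive f x df -> is_derive (fun t => - f t) x (- df).
Proof. intros; apply (is_derive_opp f); auto. Qed.

Lemma C1d_plus Om f g Df Dg : C1d Om f Df -> C1d Om g Dg ->
  C1d Om (fun y => f y + g y) (fun j y => Df j y + Dg j y).
Proof.
  intros [F1 [F2 F3]] [G1 [G2 G3]]. split; [|split].
  - intros z hz j. apply (is_derive_plus' (fun t => f (vadd z (vscale t (evec j))))
      (fun t => g (vadd z (vscale t (evec j))))); auto.
  - intros z hz j. apply cont_plus; auto.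
  - intros z hz. apply cont_plus; auto.
Qed.

Lemma vadd0 z j : vadd z (vscale 0 (evec j)) = z.
Proof. destruct z as [[a b] c]; destruct j; unfold vadd, vscale, mk3; simpl; f_equal; try f_equal; ring. Qed.

Lemma C1d_mult Om f g Df Dg : C1d Om f Df -> C1d Om g Dg ->
  C1d Om (fun y => f y * g y) (fun j y => Df j y * g y + f y * Dg j y).
Proof.
  intros [F1 [F2 F3]] [G1 [G2 G3]]. split; [|split].
  - intros z hz j. assert (H := is_derive_mult' (fun t => f (vadd z (vscale t (evec j))))
      (fun t => g (vadd z (vscale t (evec j)))) 0 _ _ (F1 z hz j) (G1 z hz j)).
    simpl in H. rewrite vadd0 in H. exact H.
  - intros z hz j. apply cont_plus; apply cont_mult; auto.
  - intros z hz. apply cont_mult; auto.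
Qed.

Lemma C1d_cst Om c : C1d Om (fun _ => c) (fun _ _ => 0).
Proof.
  split; [|split].
  - intros. apply (is_derive_const (K := R_AbsRing) (V := R_NormedModule)).
  - intros. apply cont_cst.
  - intros. apply cont_cst.
Qed.

Lemma C1d_opp Om f Df : C1d Om f Df -> C1d Om (fun y => - f y) (fun j y => - Df j y).
Proof.
  intros [F1 [F2 F3]]. split; [|split].
  - intros z hz j. apply (is_derive_opp' (fun t => f (vadd z (vscale t (evec j))))); auto.
  - intros z hz j. apply cont_opp; auto.
  - intros z hz. apply cont_opp; auto.
Qed.

Lemma C1d_minus Om f g Df Dg : C1d Om f Df -> C1d Om g Dg ->
  C1d Om (fun y => f y - g y) (fun j y => Df j y - Dg j y).
Proof. intros H1 H2. apply (C1d_plus Om f (fun y => - g y)); auto. apply C1d_opp; auto. Qed.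

Definition kd (j k : idx) : R := match j, k with I1, I1 | I2, I2 | I3, I3 => 1 | _, _ => 0 end.

Lemma C1d_coord Om k : C1d Om (fun y => coord y k) (fun j _ => kd j k).
Proof.
  split; [|split].
  - intros z hz j. destruct j, k; simpl; auto_derive; auto; ring.
  - intros. apply cont_cst.
  - intros. apply cont_coord.
Qed.

Lemma C1d_sum3 Om (f : idx -> R3 -> R) Df : (forall i, C1d Om (f i) (Df i)) ->
  C1d Om (fun y => sum3 (fun i => f i y)) (fun j y => sum3 (fun i => Df i j y)).
Proof. intros H. unfold sum3. repeat apply C1d_plus; apply H. Qed.

Lemma C1d_ext Om f Df Df' : C1d Om f Df -> (forall j z, Om z -> Df j z = Df' j z) ->
  open Om -> C1d Om f Df'.
Proof.
  intros [F1 [F2 F3]] E HO. split; [|split].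
  - intros z hz j. rewrite <- E; auto.
  - intros z hz j. apply continuous_ext_loc with (Df j). 2: apply F2; auto.
    generalize (HO z hz). apply filter_imp. intros y hy. apply E; auto.
  - auto.
Qed.

Lemma C1d_partial Om f Df z j : C1d Om f Df -> Om z -> partial j f z = Df j z.
Proof. intros [F1 _] hz. unfold partial. apply is_derive_unique. apply F1; auto. Qed.

Lemma C2_C1d Om f : open Om -> C2_on Om f ->
  C1d Om f (fun j => partial j f) /\ forall i, C1d Om (partial i f) (fun j => partial j (partial i f)).
Proof.
  intros HO H. split.
  - split; [|split].
    + intros z hz j. apply Derive_correct. apply (proj1 (proj1 (proj2 (H z hz)) j)).
    + intros z hz j. apply (proj2 (proj1 (proj2 (H z hz)) j)).
    + intros z hz. apply (proj1 (H z hz)).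
  - intro i. split; [|split].
    + intros z hz j. apply Derive_correct. apply (proj1 (proj2 (proj2 (H z hz)) j i)).
    + intros z hz j. apply (proj2 (proj2 (proj2 (H z hz)) j i)).
    + intros z hz. apply (proj2 (proj1 (proj2 (H z hz)) i)).
Qed.

Lemma chain_d Om f Df (g : R -> R3) (dg : idx -> R) t :
  open Om -> C1d Om f Df -> Om (g t) ->
  (forall i, is_derive (fun s => coord (g s) i) t (dg i)) ->
  is_derive (fun s => f (g s)) t (sum3 (fun i => Df i (g t) * dg i)).
Proof.
  intros HO HC Hy Hd.
  assert (E : sum3 (fun i => Df i (g t) * dg i) = sum3 (fun i => partial i f (g t) * dg i)).
  { unfold sum3. rewrite !(C1d_partial Om f Df (g t)); auto. }
  rewrite E. apply chain with Om; auto.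
  - intros z hz j. eexists. apply (proj1 HC); auto.
  - intro i. apply continuous_ext_loc with (Df i).
    generalize (HO _ Hy). apply filter_imp. intros y hy. symmetry. apply C1d_partial with Om; auto.
    apply (proj1 (proj2 HC)); auto.
Qed.

Definition CS (g : R3 -> R) : Prop := forall th ph, continuous g (sph th ph).

Lemma cont_sph {U : UniformSpace} (a b : U -> R) y : continuous a y -> continuous b y ->
  continuous (fun y => sph (a y) (b y)) y.
Proof.
  intros Ha Hb. unfold sph. apply cont_mk3.
  apply cont_mult; [apply cont_sin|apply cont_cos]; auto.
  apply cont_mult; apply cont_sin; auto.
  apply cont_cos; auto.
Qed.

Lemma cont_vcoord {U : UniformSpace} (b : U -> R3) y i : continuous b y -> continuous (fun y => coord (b y) i) y.
Proof. intro H. apply (continuous_comp b (fun z => coord z i)); auto. apply cont_coord. Qed.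

Lemma cont_P {U : UniformSpace} (x : R3) (a : U -> R) (b : U -> R3) y :
  continuous a y -> continuous b y -> continuous (fun y => vadd x (vscale (a y) (b y))) y.
Proof.
  intros Ha Hb.
  change (continuous (fun y => mk3 (coord x I1 + a y * coord (b y) I1) (coord x I2 + a y * coord (b y) I2)
     (coord x I3 + a y * coord (b y) I3)) y). apply cont_mk3; apply cont_plus; try apply cont_cst;
  apply cont_mult; auto; apply cont_vcoord; auto.
Qed.

Lemma CS_J (g : R3 -> R) s th ph : CS g -> continuous (J (fun _ => g)) (mk3 s th ph).
Proof.
  intro H. unfold J. apply (continuous_comp (fun q : R3 => sph (coord q I2) (coord q I3)) g).
  apply cont_sph; apply cont_coord. apply H.
Qed.

Lemma ex_inner g th : CS g -> ex_RInt (fun ph => g (sph th ph) * sin th) 0 (2 * PI).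
Proof.
  intro H. apply (ex_RInt_continuous (V := R_CompleteNormedModule)). intros ph _.
  apply cont_mult. apply (continuous_comp (fun ph => sph th ph) g). apply cont_sph.
  apply cont_cst. apply continuous_id. apply H. apply cont_cst.
Qed.

Lemma ex_outer g : CS g -> ex_RInt (fun th => RInt (fun ph => g (sph th ph) * sin th) 0 (2 * PI)) 0 PI.
Proof.
  intro H. apply (ex_RInt_continuous (V := R_CompleteNormedModule)). intros th _.
  apply (cont2d_snd (fun u v => RInt (fun ph => (fun _ => g) u (sph v ph) * sin v) 0 (2 * PI)) 0 th).
  apply (inner_cont (fun _ => g) 0 1 0 th). lra. rewrite Rabs_self0; lra.
  intros. apply CS_J; auto.
Qed.

Lemma avg_ext f g : (forall th ph, f (sph th ph) = g (sph th ph)) -> sph_avg f = sph_avg g.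
Proof.
  intro H. unfold sph_avg. f_equal. apply RInt_ext. intros th _. apply RInt_ext. intros ph _.
  rewrite H; auto.
Qed.

Lemma avg_plus f g : CS f -> CS g -> sph_avg (fun xi => f xi + g xi) = sph_avg f + sph_avg g.
Proof.
  intros Hf Hg. unfold sph_avg. rewrite <- Rmult_plus_distr_l. f_equal.
  rewrite (RInt_ext (fun th => RInt (fun ph => (f (sph th ph) + g (sph th ph)) * sin th) 0 (2 * PI))
    (fun th => RInt (fun ph => f (sph th ph) * sin th) 0 (2 * PI) + RInt (fun ph => g (sph th ph) * sin th) 0 (2 * PI))).
  - apply (RInt_plus (V := R_CompleteNormedModule)); apply ex_outer; auto.
  - intros th _. rewrite <- (RInt_plus (V := R_CompleteNormedModule)) by (apply ex_inner; auto).
    apply RInt_ext. intros. simpl. unfold plus; simpl. ring.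
Qed.

Lemma avg_scal c f : CS f -> sph_avg (fun xi => c * f xi) = c * sph_avg f.
Proof.
  intros Hf. unfold sph_avg.
  rewrite (RInt_ext (fun th => RInt (fun ph => c * f (sph th ph) * sin th) 0 (2 * PI))
    (fun th => c * RInt (fun ph => f (sph th ph) * sin th) 0 (2 * PI))).
  - rewrite (RInt_scal (V := R_CompleteNormedModule)) by (apply ex_outer; auto). simpl. unfold scal; simpl. unfold mult; simpl. ring.
  - intros th _. rewrite <- (RInt_scal (V := R_CompleteNormedModule)) by (apply ex_inner; auto).
    apply RInt_ext. intros. simpl. unfold scal; simpl. unfold mult; simpl. ring.
Qed.

Lemma CS_plus f g : CS f -> CS g -> CS (fun xi => f xi + g xi).
Proof. intros A B th ph. apply cont_plus; auto. Qed.
Lemma CS_mult f g : CS f -> CS g -> CS (fun xi => f xi * g xi).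
Proof. intros A B th ph. apply cont_mult; auto. Qed.
Lemma CS_cst c : CS (fun _ => c).
Proof. intros th ph. apply cont_cst. Qed.

Lemma avg_minus f g : CS f -> CS g -> sph_avg (fun xi => f xi - g xi) = sph_avg f - sph_avg g.
Proof.
  intros Hf Hg. unfold Rminus at 1.
  rewrite (avg_plus f (fun xi => - g xi)); auto.
  rewrite (avg_ext (fun xi => - g xi) (fun xi => (-1) * g xi)) by (intros; ring).
  rewrite avg_scal; auto. ring.
  intros th ph. apply cont_opp; auto.
Qed.

Lemma avg_bound f M : CS f -> (forall th ph, Rabs (f (sph th ph)) <= M) -> Rabs (sph_avg f) <= 2 * M.
Proof.
  intros Hf HM. assert (M0 : 0 <= M) by (eapply Rle_trans; [apply Rabs_pos| apply (HM 0 0)]).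
  assert (HPI := PI_RGT_0). assert (HPI4 := PI_4).
  unfold sph_avg. rewrite Rabs_mult. rewrite Rabs_right by (apply Rle_ge; apply Rlt_le, Rinv_0_lt_compat; lra).
  assert (B : Rabs (RInt (fun th => RInt (fun ph => f (sph th ph) * sin th) 0 (2 * PI)) 0 PI) <= PI * (2 * PI * M)).
  { replace (PI * (2 * PI * M)) with ((PI - 0) * (2 * PI * M)) by ring.
    apply abs_RInt_le_const. lra. apply ex_outer; auto.
    intros th _. replace (2 * PI * M) with ((2 * PI - 0) * M) by ring.
    apply abs_RInt_le_const. lra. apply ex_inner; auto.
    intros ph _. rewrite Rabs_mult. rewrite <- (Rmult_1_r M).
    apply Rmult_le_compat; try apply Rabs_pos; auto. apply Rabs_le. destruct (SIN_bound th); lra. }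
  apply Rle_trans with (/ (4 * PI) * (PI * (2 * PI * M))).
  apply Rmult_le_compat_l. apply Rlt_le, Rinv_0_lt_compat; lra. exact B.
  replace (/ (4 * PI) * (PI * (2 * PI * M))) with (PI / 2 * M) by (field; lra).
  apply Rmult_le_compat_r; lra.
Qed.

Definition xs i th ph := match i with I1 => sin th * cos ph | I2 => sin th * sin ph | I3 => cos th end.
Definition et i th ph := match i with I1 => cos th * cos ph | I2 => cos th * sin ph | I3 => - sin th end.
Definition ep i (ph : R) := match i with I1 => - sin ph | I2 => cos ph | I3 => 0 end.
Definition dep i (ph : R) := match i with I1 => - cos ph | I2 => - sin ph | I3 => 0 end.
Definition Pt (x : R3) (s th ph : R) : R3 := vadd x (vscale s (sph th ph)).

Lemma coord_sph th ph i : coord (sph th ph) i = xs i th ph.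
Proof. destruct i; reflexivity. Qed.

Section SL.
Variables (Om : R3 -> Prop) (x : R3) (s : R) (V : idx -> R3 -> R) (DV : idx -> idx -> R3 -> R).

Definition fa th ph := sin th * sum3 (fun i => et i th ph * V i (Pt x s th ph)).
Definition fb th ph := sum3 (fun i => ep i ph * V i (Pt x s th ph)).
Definition Da th ph := cos th * sum3 (fun i => et i th ph * V i (Pt x s th ph)) +
  sin th * sum3 (fun i => - xs i th ph * V i (Pt x s th ph) +
      et i th ph * sum3 (fun j => DV i j (Pt x s th ph) * (s * et j th ph))).
Definition Db th ph := sum3 (fun i => dep i ph * V i (Pt x s th ph) +
      ep i ph * sum3 (fun j => DV i j (Pt x s th ph) * (s * sin th * ep j ph))).

Lemma sph_identity th ph :
  Da th ph + Db th ph =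
  (s * (sum3 (fun i => DV i i (Pt x s th ph)) -
        sum3 (fun i => sum3 (fun j => xs i th ph * xs j th ph * DV i j (Pt x s th ph))))
   - 2 * sum3 (fun i => xs i th ph * V i (Pt x s th ph))) * sin th.
Proof.
  unfold Da, Db, sum3, xs, et, ep, dep.
  set (P := Pt x s th ph).
  generalize (sin2_cos2 th) (sin2_cos2 ph). unfold Rsqr. intros H1 H2.
  set (st := sin th) in *. set (ct := cos th) in *. set (sp := sin ph) in *. set (cp := cos ph) in *.
  nsatz.
Qed.

Hypotheses (HO : open Om) (Hin : forall th ph, Om (Pt x s th ph))
  (HV : forall i, C1d Om (V i) (DV i)).

Lemma coordPt_derive_th th ph j :
  is_derive (fun t => coord (Pt x s t ph) j) th (s * et j th ph).
Proof. destruct j; unfold Pt; simpl; auto_derive; auto; ring. Qed.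

Lemma coordPt_derive_ph th ph j :
  is_derive (fun t => coord (Pt x s th t) j) ph (s * sin th * ep j ph).
Proof. destruct j; unfold Pt; simpl; auto_derive; auto; ring. Qed.

Lemma V_derive_th i th ph :
  is_derive (fun t => V i (Pt x s t ph)) th (sum3 (fun j => DV i j (Pt x s th ph) * (s * et j th ph))).
Proof. apply (chain_d Om (V i) (DV i) (fun t => Pt x s t ph)); auto. intro j. apply coordPt_derive_th. Qed.

Lemma V_derive_ph i th ph :
  is_derive (fun t => V i (Pt x s th t)) ph (sum3 (fun j => DV i j (Pt x s th ph) * (s * sin th * ep j ph))).
Proof. apply (chain_d Om (V i) (DV i) (fun t => Pt x s th t)); auto. intro j. apply coordPt_derive_ph. Qed.

Lemma is_derive_sum3 (f : idx -> R -> R) df t : (forall i, is_derive (f i) t (df i)) ->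
  is_derive (fun u => sum3 (fun i => f i u)) t (sum3 df).
Proof. intro H. unfold sum3. repeat apply is_derive_plus'; apply H. Qed.

Lemma et_derive i th ph : is_derive (fun t => et i t ph) th (- xs i th ph).
Proof. destruct i; simpl; auto_derive; auto; ring. Qed.

Lemma fa_derive th ph : is_derive (fun t => fa t ph) th (Da th ph).
Proof.
  assert (HS : is_derive (fun t => sum3 (fun i => et i t ph * V i (Pt x s t ph))) th
     (sum3 (fun i => - xs i th ph * V i (Pt x s th ph) +
      et i th ph * sum3 (fun j => DV i j (Pt x s th ph) * (s * et j th ph))))).
  { apply (is_derive_sum3 (fun i t => et i t ph * V i (Pt x s t ph))). intro i.
    apply (is_derive_mult' (fun t => et i t ph) (fun t => V i (Pt x s t ph))).
    apply et_derive. apply V_derive_th. }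
  exact (is_derive_mult' sin _ th _ _ (is_derive_sin th) HS).
Qed.

Lemma ep_derive i ph : is_derive (fun t => ep i t) ph (dep i ph).
Proof. destruct i; simpl; auto_derive; auto; ring. Qed.

Lemma fb_derive th ph : is_derive (fun t => fb th t) ph (Db th ph).
Proof.
  apply (is_derive_sum3 (fun i t => ep i t * V i (Pt x s th t))). intro i.
  apply (is_derive_mult' (fun t => ep i t) (fun t => V i (Pt x s th t))).
  apply ep_derive. apply V_derive_ph.
Qed.

Lemma cont_VPt (f : R3 -> R) c th ph : (forall z, Om z -> continuous f z) ->
  continuous (fun q : R3 => f (Pt x s (coord q I2) (coord q I3))) (mk3 c th ph).
Proof.
  intro Hf. apply (continuous_comp (fun q : R3 => Pt x s (coord q I2) (coord q I3)) f).
  unfold Pt. apply cont_P. apply cont_cst. apply cont_sph; apply cont_coord.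
  apply Hf. apply Hin.
Qed.

Lemma cont_V i c th ph : continuous (fun q : R3 => V i (Pt x s (coord q I2) (coord q I3))) (mk3 c th ph).
Proof. apply cont_VPt. apply (proj2 (proj2 (HV i))). Qed.
Lemma cont_DV i j c th ph : continuous (fun q : R3 => DV i j (Pt x s (coord q I2) (coord q I3))) (mk3 c th ph).
Proof. apply cont_VPt. intros z hz. apply (proj1 (proj2 (HV i))); auto. Qed.

Ltac cont_tac := repeat match goal with
 | |- continuous (fun q => _ + _) _ => apply cont_plus
 | |- continuous (fun q => _ - _) _ => apply cont_minus
 | |- continuous (fun q => _ * _) _ => apply cont_mult
 | |- continuous (fun q => - _) _ => apply cont_opp
 | |- continuous (fun q => sin _) _ => apply cont_sin
 | |- continuous (fun q => cos _) _ => apply cont_cos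
 | |- continuous (fun q => coord q _) _ => apply cont_coord
 | |- continuous (fun q => V _ _) _ => apply cont_V
 | |- continuous (fun q => DV _ _ _) _ => apply cont_DV
 | |- continuous (fun q => _) _ => apply cont_cst
end.

Lemma cont_Da c th ph : continuous (fun q : R3 => Da (coord q I2) (coord q I3)) (mk3 c th ph).
Proof. cbv beta iota delta [Da sum3 et xs ep dep]. cont_tac. Qed.
Lemma cont_Db c th ph : continuous (fun q : R3 => Db (coord q I2) (coord q I3)) (mk3 c th ph).
Proof. cbv beta iota delta [Db sum3 et xs ep dep]. cont_tac. Qed.
Lemma cont_fa c th ph : continuous (fun q : R3 => fa (coord q I2) (coord q I3)) (mk3 c th ph).
Proof. cbv beta iota delta [fa sum3 et xs ep dep]. cont_tac. Qed.

Lemma sph_2PI th : sph th (2 * PI) = sph th 0.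
Proof. unfold sph. rewrite cos_2PI, sin_2PI, cos_0, sin_0. reflexivity. Qed.

Lemma int_Db th : RInt (fun ph => Db th ph) 0 (2 * PI) = 0.
Proof.
  assert (E : fb th (2 * PI) - fb th 0 = 0).
  { unfold fb, Pt, ep. rewrite sph_2PI, cos_2PI, sin_2PI, cos_0, sin_0. ring. }
  transitivity (fb th (2 * PI) - fb th 0). 2: exact E. apply is_RInt_unique.
  - apply (is_RInt_derive (V := R_CompleteNormedModule) (fun t => fb th t)).
    + intros ph _. apply fb_derive.
    + intros ph _. apply (cont_of3_line (fun q => Db (coord q I2) (coord q I3)) 0 th ph). apply cont_Db.
Qed.

Lemma int_Da : RInt (fun th => RInt (fun ph => Da th ph) 0 (2 * PI)) 0 PI = 0.
Proof.
  assert (HPI := PI_RGT_0).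
  set (A := fun th => RInt (fun ph => fa th ph) 0 (2 * PI)).
  assert (DA : forall th, is_derive A th (RInt (fun ph => Da th ph) 0 (2 * PI))).
  { intro th. unfold A.
    rewrite (RInt_ext (fun ph => Da th ph) (fun ph => Derive (fun t => fa t ph) th)).
    2:{ intros. symmetry. apply is_derive_unique. apply fa_derive. }
    apply (is_derive_RInt_param (fun t ph => fa t ph)).
    - apply filter_forall. intros t ph _. eexists. apply fa_derive.
    - intros ph _. apply continuity_2d_pt_ext with (fun u v => Da u v).
      intros. symmetry. apply is_derive_unique. apply fa_derive.
      apply (cont2d_of3' (fun q => Da (coord q I2) (coord q I3)) 0 th ph). apply cont_Da.
    - apply filter_forall. intros t. apply (ex_RInt_continuous (V := R_CompleteNormedModule)).
      intros ph _. apply (cont_of3_line (fun q => fa (coord q I2) (coord q I3)) 0 t ph). apply cont_fa. }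
  assert (E : A PI - A 0 = 0).
  { assert (Z1 : forall ph, fa PI ph = 0) by (intro; unfold fa; rewrite sin_PI; ring).
    assert (Z2 : forall ph, fa 0 ph = 0) by (intro; unfold fa; rewrite sin_0; ring).
    unfold A. rewrite (RInt_ext (fun ph => fa PI ph) (fun _ => 0)) by (intros; apply Z1).
    rewrite (RInt_ext (fun ph => fa 0 ph) (fun _ => 0)) by (intros; apply Z2).
    rewrite RInt_const. unfold scal; simpl; unfold mult; simpl. ring. }
  transitivity (A PI - A 0). 2: exact E. apply is_RInt_unique.
  - apply (is_RInt_derive (V := R_CompleteNormedModule) A).
    + intros th _. apply DA.
    + intros th _. apply (cont2d_snd (fun (u : R) v => RInt (fun ph => Da v ph) 0 (2 * PI)) 0 th).
      apply (RInt_cont2 (fun (u : R) v ph => Da v ph) 0 (2 * PI) 0 th 1). lra. lra.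
      intros. apply cont_Da.
Qed.

End SL.

Lemma cont_xi (f : R3 -> R) (x : R3) (s : R) xi0 : continuous f (vadd x (vscale s xi0)) ->
  continuous (fun xi => f (vadd x (vscale s xi))) xi0.
Proof.
  intro H. apply (continuous_comp (fun xi => vadd x (vscale s xi)) f); auto.
  apply cont_P. apply cont_cst. apply continuous_id.
Qed.

Lemma sphere_lemma Om x s V DV : open Om -> (forall th ph, Om (Pt x s th ph)) ->
  (forall i, C1d Om (V i) (DV i)) ->
  s * sph_avg (fun xi => sum3 (fun i => DV i i (vadd x (vscale s xi))) -
     sum3 (fun i => sum3 (fun j => coord xi i * coord xi j * DV i j (vadd x (vscale s xi))))) =
  2 * sph_avg (fun xi => sum3 (fun i => coord xi i * V i (vadd x (vscale s xi)))).
Proof.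
  intros HO Hin HV.
  assert (CDV : forall i j th ph, continuous (fun xi => DV i j (vadd x (vscale s xi))) (sph th ph)).
  { intros. apply cont_xi. apply (proj1 (proj2 (HV i))). apply Hin. }
  assert (CV : forall i th ph, continuous (fun xi => V i (vadd x (vscale s xi))) (sph th ph)).
  { intros. apply cont_xi. apply (proj2 (proj2 (HV i))). apply Hin. }
  set (g1 := fun xi => sum3 (fun i => DV i i (vadd x (vscale s xi))) -
     sum3 (fun i => sum3 (fun j => coord xi i * coord xi j * DV i j (vadd x (vscale s xi))))).
  set (g2 := fun xi => sum3 (fun i => coord xi i * V i (vadd x (vscale s xi)))).
  assert (C1 : CS g1).
  { intros th ph. unfold g1, sum3. repeat match goal with
   | |- continuous (fun q => _ + _) _ => apply cont_plus
   | |- continuous (fun q => _ - _) _ => apply cont_minus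
   | |- continuous (fun q => _ * _) _ => apply cont_mult
   | |- continuous (fun q => coord q _) _ => apply cont_coord
   | |- continuous (fun q => DV _ _ _) _ => apply CDV
   | |- continuous (fun q => V _ _) _ => apply CV
   end. }
  assert (C2 : CS g2).
  { intros th ph. unfold g2, sum3. repeat match goal with
   | |- continuous (fun q => _ + _) _ => apply cont_plus
   | |- continuous (fun q => _ - _) _ => apply cont_minus
   | |- continuous (fun q => _ * _) _ => apply cont_mult
   | |- continuous (fun q => coord q _) _ => apply cont_coord
   | |- continuous (fun q => DV _ _ _) _ => apply CDV
   | |- continuous (fun q => V _ _) _ => apply CV
   end. }
  cut (s * sph_avg g1 - 2 * sph_avg g2 = 0). intro; lra.
  rewrite <- (avg_scal s g1) by auto. rewrite <- (avg_scal 2 g2) by auto.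
  rewrite <- avg_minus.
  2:{ intros th ph. apply cont_mult. apply cont_cst. apply C1. }
  2:{ intros th ph. apply cont_mult. apply cont_cst. apply C2. }
  unfold sph_avg.
  rewrite (RInt_ext _ (fun th => RInt (fun ph => Da x s V DV th ph) 0 (2 * PI))).
  - rewrite (int_Da Om); auto. ring.
  - intros th _.
    rewrite (RInt_ext _ (fun ph => Da x s V DV th ph + Db x s V DV th ph)).
    + rewrite (RInt_plus (V := R_CompleteNormedModule)).
      * simpl. unfold plus; simpl. rewrite (int_Db Om); auto. rewrite Rplus_0_r; reflexivity.
      * apply (ex_RInt_continuous (V := R_CompleteNormedModule)). intros ph _.
        apply (cont_of3_line (fun q => Da x s V DV (coord q I2) (coord q I3)) 0 th ph). apply (cont_Da Om); auto.
      * apply (ex_RInt_continuous (V := R_CompleteNormedModule)). intros ph _.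
        apply (cont_of3_line (fun q => Db x s V DV (coord q I2) (coord q I3)) 0 th ph). apply (cont_Db Om); auto.
    + intros ph _. rewrite (sph_identity x s V DV th ph). unfold g1, g2, sum3. rewrite !coord_sph. unfold Pt. reflexivity.
Qed.

Lemma nsq_e (z : R3) : nsq z = coord z I1 * coord z I1 + coord z I2 * coord z I2 + coord z I3 * coord z I3.
Proof. reflexivity. Qed.

Lemma nsq_pos z : 0 <= nsq z.
Proof. rewrite nsq_e. nra. Qed.

Lemma edist_sym y z : edist y z = edist z y.
Proof. unfold edist, enorm. f_equal. rewrite !nsq_e. unfold vsub, mk3; simpl. ring. Qed.

Lemma edist_line (x xi : R3) a b : nsq xi = 1 ->
  edist (vadd x (vscale a xi)) (vadd x (vscale b xi)) = Rabs (a - b).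
Proof.
  intro H. unfold edist, enorm. rewrite <- sqrt_Rsqr_abs. f_equal. rewrite nsq_e in *.
  unfold vsub, vadd, vscale, mk3; simpl. unfold Rsqr.
  transitivity ((a - b) * (a - b) * (coord xi I1 * coord xi I1 + coord xi I2 * coord xi I2 + coord xi I3 * coord xi I3)).
  simpl; ring. rewrite H; ring.
Qed.

Lemma edist_x_line (x xi : R3) b : nsq xi = 1 -> edist x (vadd x (vscale b xi)) = Rabs b.
Proof.
  intro H. replace x with (vadd x (vscale 0 xi)) at 1.
  rewrite edist_line; auto. replace (0 - b) with (- b) by ring. apply Rabs_Ropp.
  destruct x as [[a1 a2] a3]. unfold vadd, vscale, mk3; simpl. f_equal; [f_equal|]; ring.
Qed.

Lemma vadd_0 (x xi : R3) : vadd x (vscale 0 xi) = x.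
Proof. destruct x as [[a1 a2] a3]. unfold vadd, vscale, mk3; simpl. f_equal; [f_equal|]; ring. Qed.

Lemma CS3 a b : dot a b * dot a b <= nsq a * nsq b.
Proof.
  rewrite !nsq_e. unfold dot, sum3.
  set (a1 := coord a I1). set (a2 := coord a I2). set (a3 := coord a I3).
  set (b1 := coord b I1). set (b2 := coord b I2). set (b3 := coord b I3).
  assert (E : (a1*a1+a2*a2+a3*a3)*(b1*b1+b2*b2+b3*b3) - (a1*b1+a2*b2+a3*b3)*(a1*b1+a2*b2+a3*b3) =
    (a1*b2-a2*b1)*(a1*b2-a2*b1) + (a1*b3-a3*b1)*(a1*b3-a3*b1) + (a2*b3-a3*b2)*(a2*b3-a3*b2)) by ring.
  assert (0 <= (a1*b2-a2*b1)*(a1*b2-a2*b1)) by apply Rle_0_sqr.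
  assert (0 <= (a1*b3-a3*b1)*(a1*b3-a3*b1)) by apply Rle_0_sqr.
  assert (0 <= (a2*b3-a3*b2)*(a2*b3-a3*b2)) by apply Rle_0_sqr.
  lra.
Qed.

Lemma edist_triang x y z : edist x z <= edist x y + edist y z.
Proof.
  unfold edist, enorm.
  set (a := vsub x y). set (b := vsub y z).
  assert (E : nsq (vsub x z) = nsq a + 2 * dot a b + nsq b).
  { unfold a, b. rewrite !nsq_e. unfold dot, sum3, vsub, mk3; simpl. ring. }
  rewrite E.
  assert (Ha := nsq_pos a). assert (Hb := nsq_pos b).
  assert (CS : dot a b <= sqrt (nsq a) * sqrt (nsq b)).
  { rewrite <- sqrt_mult by auto.
    destruct (Rle_or_lt (dot a b) 0). apply Rle_trans with 0; auto. apply sqrt_pos.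
    apply Rsqr_incr_0_var. rewrite Rsqr_sqrt. unfold Rsqr.
    apply CS3. apply Rmult_le_pos; auto. apply sqrt_pos. }
  apply Rsqr_incr_0_var. 2: apply Rplus_le_le_0_compat; apply sqrt_pos.
  rewrite Rsqr_sqrt. 2:{ assert (dot a b >= - (sqrt (nsq a) * sqrt (nsq b))).
    { apply Rle_ge. rewrite <- sqrt_mult by auto. 
      destruct (Rle_or_lt 0 (dot a b)). apply Rle_trans with 0. rewrite <- Ropp_0. apply Ropp_le_contravar. apply sqrt_pos. auto.
      rewrite <- (Ropp_involutive (dot a b)). apply Ropp_le_contravar.
      apply Rsqr_incr_0_var. rewrite Rsqr_sqrt. unfold Rsqr. replace (- dot a b * - dot a b) with (dot a b * dot a b) by ring. apply CS3.
      apply Rmult_le_pos; auto. apply sqrt_pos. }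
    assert (sqrt (nsq a) * sqrt (nsq a) = nsq a) by (apply sqrt_sqrt; auto).
    assert (sqrt (nsq b) * sqrt (nsq b) = nsq b) by (apply sqrt_sqrt; auto).
    assert (0 <= (sqrt (nsq a) - sqrt (nsq b)) * (sqrt (nsq a) - sqrt (nsq b))) by apply Rle_0_sqr.
    nra. }
  unfold Rsqr.
  assert (sqrt (nsq a) * sqrt (nsq a) = nsq a) by (apply sqrt_sqrt; auto).
  assert (sqrt (nsq b) * sqrt (nsq b) = nsq b) by (apply sqrt_sqrt; auto).
  nra.
Qed.

Lemma near3_edist y t d : near3 y t d -> edist y t < 2 * d.
Proof.
  intro H. assert (h1 := H I1). assert (h2 := H I2). assert (h3 := H I3).
  assert (d0 : 0 < d) by (assert (k := Rabs_pos (coord t I1 - coord y I1)); lra).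
  unfold edist, enorm. rewrite <- (sqrt_Rsqr (2 * d)) by lra.
  apply sqrt_lt_1_alt. split. apply nsq_pos.
  rewrite nsq_e. unfold vsub, mk3; simpl.
  apply Rabs_def2 in h1. apply Rabs_def2 in h2. apply Rabs_def2 in h3.
  unfold Rsqr. simpl in *. nra.
Qed.

Lemma seg Om x r : (forall y, boundary Om y -> r < edist x y) -> Om x ->
  forall xi, nsq xi = 1 -> forall t, 0 <= t <= r -> Om (vadd x (vscale t xi)).
Proof.
  intros Hrd Hx xi Hxi t1 [h0 h1].
  set (L := fun t => vadd x (vscale t xi)).
  apply NNPP. intro Hn. fold (L t1) in Hn.
  set (E := fun t => 0 <= t /\ forall t', 0 <= t' <= t -> Om (L t')).
  assert (E0 : E 0).
  { split. lra. intros t' ht'. replace t' with 0 by lra. unfold L. rewrite vadd_0. auto. }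
  assert (Eb : bound E).
  { exists t1. intros t [ht Ht]. destruct (Rle_or_lt t t1); auto. exfalso. apply Hn. apply Ht. lra. }
  destruct (completeness E Eb (ex_intro _ 0 E0)) as [b [Hub Hlub]].
  assert (b0 : 0 <= b) by (apply Hub; auto).
  assert (bt1 : b <= t1).
  { apply Hlub. intros t [ht Ht]. destruct (Rle_or_lt t t1); auto. exfalso. apply Hn. apply Ht. lra. }
  assert (K : forall t', 0 <= t' < b -> Om (L t')).
  { intros t' ht'. apply NNPP. intro hn.
    assert (b <= t'). { apply Hlub. intros t [ht Ht]. destruct (Rle_or_lt t t'); auto.
      exfalso. apply hn. apply Ht. lra. }
    lra. }
  assert (Bd : boundary Om (L b)).
  { split.
    - intros eps Heps. destruct (Rlt_or_le 0 b) as [bp|bz].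
      + exists (L (Rmax 0 (b - eps / 2))). split.
        apply K. split. apply Rmax_l. apply Rmax_lub_lt; lra.
        unfold L. rewrite edist_line; auto. unfold Rmax. destruct Rle_dec; rewrite Rabs_left1; lra.
      + exists (L 0). split. apply (proj2 E0). lra.
        replace b with 0 by lra. unfold L. rewrite edist_line; auto. rewrite Rabs_self0; auto.
    - intros [eps [Heps Hi]].
      assert (E (b + eps / 2)).
      { split. lra. intros t' ht'. destruct (Rlt_or_le t' b). apply K; lra.
        apply Hi. unfold L. rewrite edist_line; auto. apply Rabs_def1; lra. }
      assert (b + eps / 2 <= b) by (apply Hub; auto). lra. }
  assert (H := Hrd _ Bd). unfold L in H. rewrite edist_x_line in H; auto. rewrite Rabs_right in H; lra.
Qed.

Lemma edist0 (x z : R3) : edist x z = 0 -> z = x.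
Proof.
  unfold edist, enorm. intro H. apply sqrt_eq_0 in H. 2: apply nsq_pos.
  rewrite nsq_e in H. unfold vsub, mk3 in H; simpl in H.
  destruct x as [[a1 a2] a3]; destruct z as [[b1 b2] b3]; simpl in *.
  assert (q1 := Rle_0_sqr (a1 - b1)). assert (q2 := Rle_0_sqr (a2 - b2)). assert (q3 := Rle_0_sqr (a3 - b3)).
  unfold Rsqr in *.
  assert (e1 : (a1 - b1) * (a1 - b1) = 0) by lra. assert (e2 : (a2 - b2) * (a2 - b2) = 0) by lra.
  assert (e3 : (a3 - b3) * (a3 - b3) = 0) by lra.
  apply Rmult_integral in e1. apply Rmult_integral in e2. apply Rmult_integral in e3.
  assert (a1 = b1) by (destruct e1; lra). assert (a2 = b2) by (destruct e2; lra). assert (a3 = b3) by (destruct e3; lra).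
  subst; reflexivity.
Qed.

Lemma edist_pos x z : 0 <= edist x z.
Proof. apply sqrt_pos. Qed.

Lemma polar (x z : R3) : 0 < edist x z -> exists xi, nsq xi = 1 /\ z = vadd x (vscale (edist x z) xi).
Proof.
  intro H. set (rho := edist x z) in *.
  assert (Hr : rho * rho = nsq (vsub z x)).
  { unfold rho. rewrite edist_sym. unfold edist, enorm. apply sqrt_sqrt. apply nsq_pos. }
  exists (vscale (/ rho) (vsub z x)). split.
  - rewrite nsq_e in *. unfold vscale, vsub, mk3 in *; simpl in *.
    apply Rmult_eq_reg_l with (rho * rho). rewrite Rmult_1_r. rewrite Hr at 2. field. lra.
    apply Rgt_not_eq. nra.
  - destruct x as [[a1 a2] a3]; destruct z as [[b1 b2] b3]. unfold vadd, vscale, vsub, mk3; simpl.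
    f_equal; [f_equal|]; field; lra.
Qed.

Lemma closed_ball Om x r : (forall y, boundary Om y -> r < edist x y) -> Om x ->
  forall z, edist x z <= r -> Om z.
Proof.
  intros Hrd Hx z Hz. destruct (Rle_lt_or_eq_dec 0 (edist x z) (edist_pos x z)) as [hp|he].
  - destruct (polar x z hp) as [xi [Hxi E]]. rewrite E. apply (seg Om x r); auto. split; lra.
  - rewrite (edist0 x z); auto.
Qed.

Lemma coord_le_edist (y z : R3) i : Rabs (coord z i - coord y i) <= edist z y.
Proof.
  unfold edist, enorm. rewrite <- sqrt_Rsqr_abs. apply sqrt_le_1_alt.
  rewrite nsq_e. unfold vsub, mk3; simpl. unfold Rsqr.
  destruct z as [[a1 a2] a3]; destruct y as [[b1 b2] b3]; simpl.
  assert (q1 := Rle_0_sqr (a1 - b1)). assert (q2 := Rle_0_sqr (a2 - b2)). assert (q3 := Rle_0_sqr (a3 - b3)).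
  unfold Rsqr in *. destruct i; simpl; lra.
Qed.

Definition toR3 (t : Compactness.Tn 3 R) : R3 := mk3 (fst t) (fst (snd t)) (fst (snd (snd t))).
Definition toTn (y : R3) : Compactness.Tn 3 R := (coord y I1, (coord y I2, (coord y I3, tt))).

Lemma margin Om x r : open Om -> 0 < r -> (forall z, edist x z <= r -> Om z) ->
  exists R, r < R /\ forall z, edist x z < R -> Om z.
Proof.
  intros HO Hr Hcb.
  assert (D : forall t : Compactness.Tn 3 R, {d : posreal |
     (Om (toR3 t) -> forall z, edist z (toR3 t) < 4 * d -> Om z) /\
     (~ Om (toR3 t) -> 4 * d <= edist x (toR3 t) - r)}).
  { intro t. apply constructive_indefinite_description.
    destruct (classic (Om (toR3 t))) as [h|h].
    - destruct (open_nbhd Om _ HO h) as [e [He Hin]].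
      assert (He4 : 0 < e / 4) by lra. exists (mkposreal _ He4). simpl. split.
      + intros _ z hz. apply Hin. intro i. eapply Rle_lt_trans. apply coord_le_edist. lra.
      + intro; contradiction.
    - assert (r < edist x (toR3 t)).
      { destruct (Rle_or_lt (edist x (toR3 t)) r); auto. exfalso; apply h; apply Hcb; auto. }
      assert (He4 : 0 < (edist x (toR3 t) - r) / 4) by lra. exists (mkposreal _ He4). simpl. split.
      + intro; contradiction.
      + intros _. lra. }
  set (delta := fun t => proj1_sig (D t)).
  set (a := (coord x I1 - (r + 1), (coord x I2 - (r + 1), (coord x I3 - (r + 1), tt))) : Compactness.Tn 3 R).
  set (b := (coord x I1 + (r + 1), (coord x I2 + (r + 1), (coord x I3 + (r + 1), tt))) : Compactness.Tn 3 R).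
  destruct (compactness_value 3 a b delta) as [d0 Hd0].
  set (d := Rmin d0 1).
  assert (Hd : 0 < d) by (unfold d; apply Rmin_pos; [apply cond_pos|lra]).
  assert (Hdd : d <= d0) by apply Rmin_l.
  exists (r + d / 4). split. lra.
  intros z hz. destruct (Rle_or_lt (edist x z) r) as [hle|hlt]. apply Hcb; auto.
  destruct (polar x z) as [xi [Hxi Ez]]. lra.
  set (y := vadd x (vscale r xi)).
  assert (Hxy : edist x y = r) by (unfold y; rewrite edist_x_line; auto; apply Rabs_right; lra).
  assert (Hzy : edist z y < d / 4).
  { rewrite Ez. unfold y. rewrite edist_line; auto. rewrite Rabs_right; lra. }
  assert (Hbox : bounded_n 3 a b (toTn y)).
  { assert (B : forall i, Rabs (coord y i - coord x i) <= r).
    { intro i. eapply Rle_trans. apply coord_le_edist. rewrite edist_sym. lra. }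
    assert (B1 := B I1). assert (B2 := B I2). assert (B3 := B I3).
    apply Rabs_le_between' in B1. apply Rabs_le_between' in B2. apply Rabs_le_between' in B3.
    unfold a, b, toTn. simpl in *. repeat split; try lra. }
  apply NNPP. intro hn. apply (Hd0 (toTn y) Hbox). intros [t [_ [Hcl Hdt]]].
  assert (Hn3 : near3 (toR3 t) y (delta t)).
  { destruct t as [t1 [t2 [t3 []]]]. simpl in Hcl. destruct Hcl as [c1 [c2 [c3 _]]].
    intro i; destruct i; simpl; auto. }
  assert (Hyt := near3_edist _ _ _ Hn3). rewrite edist_sym in Hyt.
  assert (Pd := proj2_sig (D t)). fold (delta t) in Pd. destruct Pd as [P1 P2].
  assert (dpos := cond_pos (delta t)).
  destruct (classic (Om (toR3 t))) as [ht|ht].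
  - apply hn. apply (P1 ht). assert (T := edist_triang z y (toR3 t)). lra.
  - specialize (P2 ht). assert (T := edist_triang x y (toR3 t)). lra.
Qed.

Lemma coord_line y t i j : coord (vadd y (vscale t (evec i))) j - coord y j = t * kd i j.
Proof. destruct y as [[a b] c]; destruct i, j; simpl; ring. Qed.

Lemma line_loc_Om Om y i : open Om -> Om y -> locally 0 (fun t => Om (vadd y (vscale t (evec i)))).
Proof.
  intros HO Hy. destruct (open_nbhd Om y HO Hy) as [e [He Hin]].
  exists (mkposreal e He). intros t ht. apply Hin. simpl in ht. unfold ball in ht; simpl in ht.
  unfold AbsRing_ball, abs, minus, plus, opp in ht; simpl in ht. rewrite Ropp_0, Rplus_0_r in ht.
  intro j. rewrite coord_line. rewrite Rabs_mult.
  destruct i, j; simpl; rewrite ?Rabs_R1, ?Rabs_R0; lra.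
Qed.

Lemma partial_ext_Om Om f g y i : open Om -> Om y -> (forall z, Om z -> f z = g z) ->
  partial i f y = partial i g y.
Proof.
  intros HO Hy E. unfold partial. apply Derive_ext_loc.
  generalize (line_loc_Om Om y i HO Hy). apply filter_imp. intros t ht. apply E; auto.
Qed.

Lemma deriv_zero_Om Om f Df y i : open Om -> Om y -> C1d Om f Df -> (forall z, Om z -> f z = 0) -> Df i y = 0.
Proof.
  intros HO Hy HC Z. assert (H := proj1 HC y Hy i).
  rewrite <- (is_derive_unique _ _ _ H). apply is_derive_unique.
  apply (is_derive_ext_loc (fun _ => 0)).
  generalize (line_loc_Om Om y i HO Hy). apply filter_imp. intros t ht. symmetry; apply Z; auto.
  apply (is_derive_const (K := R_AbsRing) (V := R_NormedModule)).
Qed.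

Lemma alg_div (pp uu : idx -> R) (a : idx -> idx -> R) (b : idx -> idx -> idx -> R) :
  - sum3 pp = sum3 (fun i => sum3 (fun j => b i j i * uu j + a i j * a j i + (a i i * a j j + uu i * b j j i))) ->
  sum3 (fun i => a i i) = 0 ->
  (forall k, sum3 (fun j => b j j k) = 0) ->
  sum3 (fun i => pp i + sum3 (fun j => a j i * a i j + uu j * b i j i)) = 0.
Proof.
  intros HP Hd Hdd. assert (H1 := Hdd I1). assert (H2 := Hdd I2). assert (H3 := Hdd I3).
  unfold sum3 in *.
  assert (E : a I3 I3 = - a I1 I1 - a I2 I2) by lra. rewrite E in HP |- *.
  assert (E1 : b I3 I3 I1 = - b I1 I1 I1 - b I2 I2 I1) by lra.
  assert (E2 : b I3 I3 I2 = - b I1 I1 I2 - b I2 I2 I2) by lra.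
  assert (E3 : b I3 I3 I3 = - b I1 I1 I3 - b I2 I2 I3) by lra.
  rewrite E1, E2, E3 in HP. rewrite ?E1, ?E2, ?E3. lra.
Qed.

Section Main.
Variables (Om : R3 -> Prop) (u : R3 -> R3) (p : R3 -> R).
Hypotheses (HO : open Om)
  (Hu : forall i, C2_on Om (fun y => coord (u y) i))
  (Hdiv : forall y, Om y -> sum3 (fun i => partial i (fun z => coord (u z) i) y) = 0)
  (Hp : C2_on Om p)
  (Hpoisson : forall y, Om y ->
     - sum3 (fun i => partial i (partial i p) y)
     = sum3 (fun i => sum3 (fun j =>
         partial i (partial j (fun z => coord (u z) i * coord (u z) j)) y))).

Definition ui i := fun y => coord (u y) i.

Lemma Cu i : C1d Om (ui i) (fun j => partial j (ui i)).
Proof. exact (proj1 (C2_C1d Om _ HO (Hu i))). Qed.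
Lemma Cu2 i k : C1d Om (partial k (ui i)) (fun j => partial j (partial k (ui i))).
Proof. exact (proj2 (C2_C1d Om _ HO (Hu i)) k). Qed.
Lemma Cp : C1d Om p (fun j => partial j p).
Proof. exact (proj1 (C2_C1d Om _ HO Hp)). Qed.
Lemma Cp2 k : C1d Om (partial k p) (fun j => partial j (partial k p)).
Proof. exact (proj2 (C2_C1d Om _ HO Hp) k). Qed.

Lemma divU0 y : Om y ->
  sum3 (fun i => partial i (partial i p) y +
     sum3 (fun j => partial i (ui j) y * partial j (ui i) y + ui j y * partial i (partial j (ui i)) y)) = 0.
Proof.
  intro Hy.
  set (a := fun i j => partial j (ui i) y).
  set (b := fun i j k => partial k (partial j (ui i)) y).
  set (pp := fun i => partial i (partial i p) y).
  set (uu := fun i => ui i y).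
  change (sum3 (fun i => pp i + sum3 (fun j => a j i * a i j + uu j * b i j i)) = 0).
  apply alg_div.
  - unfold pp. rewrite (Hpoisson y Hy). unfold sum3.
    assert (K : forall i j, partial i (partial j (fun z => coord (u z) i * coord (u z) j)) y =
       b i j i * uu j + a i j * a j i + (a i i * a j j + uu i * b j j i)).
    { intros i j.
      assert (C := C1d_plus Om _ _ _ _ (C1d_mult Om _ _ _ _ (Cu2 i j) (Cu j)) (C1d_mult Om _ _ _ _ (Cu i) (Cu2 j j))).
      transitivity (partial i (fun z => partial j (ui i) z * ui j z + ui i z * partial j (ui j) z) y).
      - apply (partial_ext_Om Om); auto. intros z hz.
        exact (C1d_partial Om _ _ z j (C1d_mult Om _ _ _ _ (Cu i) (Cu j)) hz).
      - rewrite (C1d_partial Om _ _ y i C Hy). unfold a, b, uu. ring. }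
    rewrite !K. reflexivity.
  - apply Hdiv; auto.
  - intro k. unfold b.
    apply (deriv_zero_Om Om (fun z => sum3 (fun j => partial j (ui j) z))
       (fun k z => sum3 (fun j => partial k (partial j (ui j)) z)) y k HO Hy).
    apply (C1d_sum3 Om (fun j => partial j (ui j))). intro j. apply Cu2.
    intros z hz. apply Hdiv; auto.
Qed.

Variables (x : R3) (r : R) (v : R3).
Hypotheses (Hx : Om x) (Hr : 0 < r) (Hrd : forall y, boundary Om y -> r < edist x y).

Lemma nsq_sph th ph : nsq (sph th ph) = 1.
Proof. rewrite nsq_e. unfold sph, mk3; simpl. assert (H1 := sin2_cos2 th). assert (H2 := sin2_cos2 ph).
  unfold Rsqr in *. nra. Qed.

Lemma ballR : exists R, r < R /\ forall z, edist x z < R -> Om z.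
Proof. apply margin; auto. apply closed_ball; auto. Qed.

Lemma OmP R (HR : forall z, edist x z < R -> Om z) s th ph :
  Rabs s < R -> Om (vadd x (vscale s (sph th ph))).
Proof. intro h. apply HR. rewrite edist_x_line; auto. apply nsq_sph. Qed.

Lemma contPQ (f : R3 -> R) s th ph : (forall z, Om z -> continuous f z) -> Om (vadd x (vscale s (sph th ph))) ->
  continuous (fun q : R3 => f (vadd x (vscale (coord q I1) (sph (coord q I2) (coord q I3))))) (mk3 s th ph).
Proof.
  intros Hf Hin. apply (continuous_comp (fun q : R3 => vadd x (vscale (coord q I1) (sph (coord q I2) (coord q I3)))) f).
  apply cont_P. apply cont_coord. apply cont_sph; apply cont_coord. apply Hf. exact Hin.
Qed.

Lemma c_ui i z : Om z -> continuous (ui i) z.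
Proof. apply (proj2 (proj2 (Cu i))). Qed.
Lemma c_dui i j z : Om z -> continuous (partial j (ui i)) z.
Proof. intro h. apply (proj1 (proj2 (Cu i))); auto. Qed.
Lemma c_ddui i j k z : Om z -> continuous (partial k (partial j (ui i))) z.
Proof. intro h. apply (proj1 (proj2 (Cu2 i j))); auto. Qed.
Lemma c_p z : Om z -> continuous p z.
Proof. apply (proj2 (proj2 Cp)). Qed.
Lemma c_dp j z : Om z -> continuous (partial j p) z.
Proof. intro h. apply (proj1 (proj2 Cp)); auto. Qed.
Lemma c_ddp j k z : Om z -> continuous (partial k (partial j p)) z.
Proof. intro h. apply (proj1 (proj2 (Cp2 j))); auto. Qed.

Ltac fcont := match goal with
 | |- continuous (partial _ (partial _ (ui _))) _ => apply c_ddui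
 | |- continuous (partial _ (ui _)) _ => apply c_dui
 | |- continuous (ui _) _ => apply c_ui
 | |- continuous (partial _ (partial _ p)) _ => apply c_ddp
 | |- continuous (partial _ p) _ => apply c_dp
 | |- continuous p _ => apply c_p
 end.

Ltac jtac := cbv beta; repeat match goal with
 | |- continuous (fun q => _ + _) _ => apply cont_plus
 | |- continuous (fun q => _ - _) _ => apply cont_minus
 | |- continuous (fun q => _ * _) _ => apply cont_mult
 | |- continuous (fun q => - _) _ => apply cont_opp
 | |- continuous (fun q => coord q _) _ => apply cont_coord
 | |- continuous (fun q => coord (sph _ _) _) _ => apply cont_vcoord; apply cont_sph; apply cont_coord
 | |- continuous (fun q => ?f (vadd _ (vscale _ (sph _ _)))) _ => apply (contPQ f); [intros ?z ?hz; fcont; assumption|]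
 | |- continuous (fun q => ?c) _ => apply cont_cst
 end.

Lemma coord_line_gen (xi : R3) e i : coord (vadd x (vscale e xi)) i - coord x i = e * coord xi i.
Proof. destruct i; simpl; ring. Qed.

Lemma dline (xi : R3) s i : is_derive (fun t => coord (vadd x (vscale t xi)) i) s (coord xi i).
Proof. destruct i; simpl; auto_derive; auto; ring. Qed.

Definition Yf s xi := sum3 (fun i => coord xi i * (ui i (vadd x (vscale s xi)) - coord v i)).
Definition Zf s xi := sum3 (fun i => coord xi i * sum3 (fun j => partial j (ui i) (vadd x (vscale s xi)) * coord xi j)).
Definition GA s xi := p (vadd x (vscale s xi)).
Definition HA s xi := sum3 (fun i => partial i p (vadd x (vscale s xi)) * coord xi i).
Definition GB s xi := Yf s xi * Yf s xi.
Definition HB s xi := 2 * Yf s xi * Zf s xi.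

Lemma derive_F R : r < R -> (forall z, edist x z < R -> Om z) ->
  is_derive (fun s => sph_avg (GA s) + sph_avg (GB s)) r (sph_avg (HA r) + sph_avg (HB r)).
Proof.
  intros hR HR.
  assert (Heta : 0 < R - r) by lra.
  assert (Hs : forall s, Rabs (s - r) < R - r -> Rabs s < R).
  { intros s hs. apply Rabs_def2 in hs. apply Rabs_def1; lra. }
  apply is_derive_plus'.
  - apply (avg_derive GA HA r (R - r)); auto.
    + intros s th ph hs. unfold GA, HA.
      apply (chain_d Om p (fun j => partial j p) (fun t => vadd x (vscale t (sph th ph)))); auto.
      apply Cp. apply (OmP R HR); auto. intro i. apply dline.
    + intros s th ph hs. unfold J, GA. apply (contPQ p); [apply c_p| apply (OmP R HR); auto].
    + intros s th ph hs. unfold J, HA, sum3. assert (Om (vadd x (vscale s (sph th ph)))) by (apply (OmP R HR); auto).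
      jtac; auto.
  - apply (avg_derive GB HB r (R - r)); auto.
    + intros s th ph hs. assert (HO' : Om (vadd x (vscale s (sph th ph)))) by (apply (OmP R HR); auto).
      set (xi := sph th ph) in *.
      assert (DY : is_derive (fun t => Yf t xi) s (Zf s xi)).
      { unfold Yf, Zf.
        apply (is_derive_sum3 (fun i t => coord xi i * (ui i (vadd x (vscale t xi)) - coord v i))).
        intro i.
        assert (H := chain_d Om (ui i) (fun j => partial j (ui i)) (fun t => vadd x (vscale t xi)) (fun j => coord xi j) s HO (Cu i) HO' (fun j => dline xi s j)).
        assert (H2 : is_derive (fun t => coord xi i * ui i (vadd x (vscale t xi)) - coord xi i * coord v i) s
           (coord xi i * sum3 (fun j => partial j (ui i) (vadd x (vscale s xi)) * coord xi j) - 0)).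
        { apply (is_derive_minus (fun t => coord xi i * ui i (vadd x (vscale t xi))) (fun _ => coord xi i * coord v i)).
          apply is_derive_scal. exact H. apply (is_derive_const (K := R_AbsRing) (V := R_NormedModule)). }
        rewrite Rminus_0_r in H2. eapply is_derive_ext. 2: exact H2. intro t; simpl; ring. }
      unfold GB, HB.
      replace (2 * Yf s xi * Zf s xi) with (Zf s xi * Yf s xi + Yf s xi * Zf s xi) by ring.
      apply (is_derive_mult' (fun t => Yf t xi) (fun t => Yf t xi)); auto.
    + intros s th ph hs. assert (Om (vadd x (vscale s (sph th ph)))) by (apply (OmP R HR); auto).
      unfold J, GB, Yf, sum3. jtac; auto.
    + intros s th ph hs. assert (Om (vadd x (vscale s (sph th ph)))) by (apply (OmP R HR); auto).
      unfold J, HB, Yf, Zf, sum3. jtac; auto.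
Qed.

Definition U i y := partial i p y + sum3 (fun j => ui j y * partial j (ui i) y).
Definition DU i k y := partial k (partial i p) y +
  sum3 (fun j => partial k (ui j) y * partial j (ui i) y + ui j y * partial k (partial j (ui i)) y).

Lemma CU i : C1d Om (U i) (DU i).
Proof.
  exact (C1d_plus Om _ _ _ _ (Cp2 i) (C1d_sum3 Om (fun j y => ui j y * partial j (ui i) y) _
     (fun j => C1d_mult Om _ _ _ _ (Cu j) (Cu2 i j)))).
Qed.

Lemma c_U i z : Om z -> continuous (U i) z.
Proof. apply (proj2 (proj2 (CU i))). Qed.
Lemma c_DU i j z : Om z -> continuous (DU i j) z.
Proof. intro h. apply (proj1 (proj2 (CU i))); auto. Qed.

Lemma divU y : Om y -> sum3 (fun i => DU i i y) = 0.
Proof. intro h. exact (divU0 y h). Qed.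

Ltac fcont2 := match goal with
 | |- continuous (partial _ (partial _ (ui _))) _ => apply c_ddui
 | |- continuous (partial _ (ui _)) _ => apply c_dui
 | |- continuous (ui _) _ => apply c_ui
 | |- continuous (partial _ (partial _ p)) _ => apply c_ddp
 | |- continuous (partial _ p) _ => apply c_dp
 | |- continuous p _ => apply c_p
 | |- continuous (U _) _ => apply c_U
 | |- continuous (DU _ _) _ => apply c_DU
 end.

Ltac jtac2 := cbv beta; repeat match goal with
 | |- continuous (fun q => _ + _) _ => apply cont_plus
 | |- continuous (fun q => _ - _) _ => apply cont_minus
 | |- continuous (fun q => _ * _) _ => apply cont_mult
 | |- continuous (fun q => - _) _ => apply cont_opp
 | |- continuous (fun q => coord q _) _ => apply cont_coord
 | |- continuous (fun q => coord (sph _ _) _) _ => apply cont_vcoord; apply cont_sph; apply cont_coord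
 | |- continuous (fun q => ?f (vadd _ (vscale _ (sph _ _)))) _ => apply (contPQ f); [intros ?z ?hz; fcont2; assumption|]
 | |- continuous (fun q => ?f (vadd _ (vscale _ q))) _ => apply (cont_xi f); fcont2
 | |- continuous (fun q => ?c) _ => apply cont_cst
 end.

Definition SU s xi := sum3 (fun i => coord xi i * U i (vadd x (vscale s xi))).
Definition SDU s xi := sum3 (fun i => coord xi i * sum3 (fun j => DU i j (vadd x (vscale s xi)) * coord xi j)).
Definition GG s xi := s * s * SU s xi.
Definition HG s xi := 2 * s * SU s xi + s * s * SDU s xi.

Lemma CS_SU R (HR : forall z, edist x z < R -> Om z) s : Rabs s < R -> CS (SU s).
Proof. intros hs th ph. assert (Om (vadd x (vscale s (sph th ph)))) by (apply (OmP R HR); auto).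
  unfold SU, sum3. jtac2; auto. Qed.
Lemma CS_SDU R (HR : forall z, edist x z < R -> Om z) s : Rabs s < R -> CS (SDU s).
Proof. intros hs th ph. assert (Om (vadd x (vscale s (sph th ph)))) by (apply (OmP R HR); auto).
  unfold SDU, sum3. jtac2; auto. Qed.

Lemma avg_HG R (HR : forall z, edist x z < R -> Om z) s : Rabs s < R -> sph_avg (HG s) = 0.
Proof.
  intro hs.
  assert (C1 := CS_SU R HR s hs). assert (C2 := CS_SDU R HR s hs).
  unfold HG. rewrite avg_plus.
  2:{ intros th ph. apply cont_mult. apply cont_cst. apply C1. }
  2:{ intros th ph. apply cont_mult. apply cont_cst. apply C2. }
  rewrite (avg_scal (2 * s) (SU s)) by auto. rewrite (avg_scal (s * s) (SDU s)) by auto.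
  assert (SL := sphere_lemma Om x s U DU HO).
  assert (Hin : forall th ph, Om (Pt x s th ph)) by (intros; unfold Pt; apply (OmP R HR); auto).
  specialize (SL Hin CU).
  rewrite (avg_ext _ (fun xi => 0 - SDU s xi)) in SL.
  2:{ intros th ph. rewrite divU. unfold SDU, sum3. ring. apply (OmP R HR); auto. }
  rewrite avg_minus in SL; auto. 2: apply CS_cst.
  assert (Z : sph_avg (fun _ => 0) = 0).
  { rewrite (avg_ext _ (fun xi => 0 * 1)) by (intros; ring). rewrite avg_scal. ring. apply CS_cst. }
  rewrite Z in SL. fold (SU s) in SL.
  replace (2 * s * sph_avg (SU s) + s * s * sph_avg (SDU s)) with (s * (2 * sph_avg (SU s)) + s * s * sph_avg (SDU s)) by ring.
  rewrite <- SL. ring.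
Qed.

Lemma derive_GG R (HR : forall z, edist x z < R -> Om z) s : 0 < s < R ->
  is_derive (fun t => sph_avg (GG t)) s 0.
Proof.
  intros [h0 h1].
  assert (Hs : forall t, Rabs (t - s) < R - s -> Rabs t < R).
  { intros t ht. apply Rabs_def2 in ht. apply Rabs_def1; lra. }
  rewrite <- (avg_HG R HR s) by (apply Rabs_def1; lra).
  apply (avg_derive GG HG s (R - s)). lra.
  - intros t th ph ht. assert (HO' : Om (vadd x (vscale t (sph th ph)))) by (apply (OmP R HR); auto).
    set (xi := sph th ph) in *.
    assert (DS : is_derive (fun t => SU t xi) t (SDU t xi)).
    { unfold SU, SDU. apply (is_derive_sum3 (fun i t => coord xi i * U i (vadd x (vscale t xi)))).
      intro i. apply is_derive_scal.
      apply (chain_d Om (U i) (DU i) (fun t => vadd x (vscale t xi))); auto. apply CU. intro j; apply dline. }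
    assert (DT : is_derive (fun t => t * t) t (2 * t)) by (auto_derive; auto; ring).
    assert (H := is_derive_mult' (fun t => t * t) (fun t => SU t xi) t _ _ DT DS).
    unfold GG, HG. eapply is_derive_ext. 2: exact H. intro; reflexivity.
  - intros t th ph ht. assert (Om (vadd x (vscale t (sph th ph)))) by (apply (OmP R HR); auto).
    unfold J, GG, SU, sum3. jtac2; auto.
  - intros t th ph ht. assert (Om (vadd x (vscale t (sph th ph)))) by (apply (OmP R HR); auto).
    unfold J, HG, SU, SDU, sum3. jtac2; auto.
Qed.

Lemma GG_const Rb (HR : forall z, edist x z < Rb -> Om z) a b : 0 < a -> a <= b -> b < Rb ->
  sph_avg (GG b) = sph_avg (GG a).
Proof.
  intros ha hab hb.
  destruct (MVT_gen (fun t => sph_avg (GG t)) a b (fun _ => 0)) as [c [hc E]].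
  - intros t ht. rewrite Rmin_left in ht by lra. rewrite Rmax_right in ht by lra.
    apply (derive_GG Rb HR). lra.
  - intros t ht. rewrite Rmin_left in ht by lra. rewrite Rmax_right in ht by lra.
    apply continuity_pt_filterlim. apply (ex_derive_continuous (fun t => sph_avg (GG t))).
    eexists. apply (derive_GG Rb HR). lra.
  - lra.
Qed.

Lemma sph_coord_le th ph i : Rabs (coord (sph th ph) i) <= 1.
Proof.
  rewrite coord_sph. destruct (SIN_bound th). destruct (SIN_bound ph). destruct (COS_bound th). destruct (COS_bound ph).
  destruct i; simpl; apply Rabs_le; try lra; nra.
Qed.

Lemma GG_small Rb (HR : forall z, edist x z < Rb -> Om z) : 0 < Rb ->
  exists d M, 0 < d /\ 0 <= M /\ forall e, 0 < e < d -> Rabs (sph_avg (GG e)) <= 2 * M * (e * e).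
Proof.
  intro HRb.
  assert (Cx : forall i, exists d, 0 < d /\ forall z, near3 x z d -> Rabs (U i z - U i x) < 1).
  { intro i. apply cont_nbhd. apply c_U; auto. lra. }
  destruct (Cx I1) as [d1 [hd1 D1]]. destruct (Cx I2) as [d2 [hd2 D2]]. destruct (Cx I3) as [d3 [hd3 D3]].
  set (M := (Rabs (U I1 x) + 1) + (Rabs (U I2 x) + 1) + (Rabs (U I3 x) + 1)).
  exists (Rmin (Rmin d1 d2) (Rmin d3 Rb)), M. split. repeat apply Rmin_pos; auto. split.
  unfold M. assert (k1 := Rabs_pos (U I1 x)). assert (k2 := Rabs_pos (U I2 x)). assert (k3 := Rabs_pos (U I3 x)). lra.
  intros e [he0 he1].
  assert (e1 : e < d1) by (eapply Rlt_le_trans; [exact he1|]; eapply Rle_trans; apply Rmin_l).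
  assert (e2 : e < d2) by (eapply Rlt_le_trans; [exact he1|]; eapply Rle_trans; [apply Rmin_l|apply Rmin_r]).
  assert (e3 : e < d3) by (eapply Rlt_le_trans; [exact he1|]; eapply Rle_trans; [apply Rmin_r|apply Rmin_l]).
  assert (e4 : e < Rb) by (eapply Rlt_le_trans; [exact he1|]; eapply Rle_trans; [apply Rmin_r|apply Rmin_r]).
  assert (hs : Rabs e < Rb) by (rewrite Rabs_right; lra).
  unfold GG. rewrite (avg_scal (e * e) (SU e)) by (apply (CS_SU Rb HR); auto).
  rewrite Rabs_mult. rewrite (Rabs_right (e * e)) by nra.
  rewrite (Rmult_comm (2 * M)). apply Rmult_le_compat_l. nra.
  apply avg_bound. apply (CS_SU Rb HR); auto.
  intros th ph. set (xi := sph th ph).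
  assert (Nx : forall d, e < d -> near3 x (vadd x (vscale e xi)) d).
  { intros d hd j. unfold xi. rewrite coord_line_gen. rewrite Rabs_mult, Rabs_right by lra.
    assert (h := sph_coord_le th ph j). nra. }
  assert (B : forall i d, e < d -> (forall z, near3 x z d -> Rabs (U i z - U i x) < 1) ->
      Rabs (coord xi i * U i (vadd x (vscale e xi))) <= Rabs (U i x) + 1).
  { intros i d hd Dd. rewrite Rabs_mult.
    assert (h := sph_coord_le th ph i). fold xi in h.
    assert (h2 := Dd _ (Nx d hd)).
    assert (Rabs (U i (vadd x (vscale e xi))) <= Rabs (U i x) + 1).
    { replace (U i (vadd x (vscale e xi))) with ((U i (vadd x (vscale e xi)) - U i x) + U i x) by ring.
      eapply Rle_trans. apply Rabs_triang. lra. }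
    assert (0 <= Rabs (coord xi i)) by apply Rabs_pos.
    assert (0 <= Rabs (U i (vadd x (vscale e xi)))) by apply Rabs_pos.
    nra. }
  unfold SU, sum3. unfold M.
  eapply Rle_trans. apply Rabs_triang. eapply Rle_trans. apply Rplus_le_compat_r. apply Rabs_triang.
  assert (b1 := B I1 d1 e1 D1). assert (b2 := B I2 d2 e2 D2). assert (b3 := B I3 d3 e3 D3). lra.
Qed.

Lemma E1 : sph_avg (SU r) = 0.
Proof.
  destruct ballR as [Rb [hRb HR]].
  destruct (GG_small Rb HR) as [d [M [hd [hM Hs]]]]. lra.
  assert (Gr : sph_avg (GG r) = 0).
  { apply NNPP. intro hn. set (g := Rabs (sph_avg (GG r))).
    assert (hg : 0 < g) by (apply Rabs_pos_lt; auto).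
    set (e := Rmin (Rmin (d / 2) r) (Rmin 1 (g / (2 * M + 1)))).
    assert (he0 : 0 < e) by (unfold e; repeat apply Rmin_pos; try lra; apply Rdiv_lt_0_compat; lra).
    assert (he1 : e <= d / 2) by (unfold e; eapply Rle_trans; apply Rmin_l).
    assert (he2 : e <= r) by (unfold e; eapply Rle_trans; [apply Rmin_l|apply Rmin_r]).
    assert (he3 : e <= 1) by (unfold e; eapply Rle_trans; [apply Rmin_r|apply Rmin_l]).
    assert (he4 : e <= g / (2 * M + 1)) by (unfold e; eapply Rle_trans; [apply Rmin_r|apply Rmin_r]).
    assert (Eq : sph_avg (GG r) = sph_avg (GG e)) by (apply (GG_const Rb HR); lra).
    assert (B := Hs e ltac:(lra)). rewrite <- Eq in B. fold g in B.
    assert (2 * M * (e * e) <= 2 * M * e) by (apply Rmult_le_compat_l; nra).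
    assert (2 * M * e <= 2 * M * (g / (2 * M + 1))) by (apply Rmult_le_compat_l; lra).
    assert (2 * M * (g / (2 * M + 1)) < g).
    { apply Rmult_lt_reg_r with (2 * M + 1). lra.
      replace (2 * M * (g / (2 * M + 1)) * (2 * M + 1)) with (2 * M * g) by (field; lra). nra. }
    lra. }
  unfold GG in Gr. rewrite (avg_scal (r * r) (SU r)) in Gr by (apply (CS_SU Rb HR); rewrite Rabs_right; lra).
  apply Rmult_integral in Gr. destruct Gr as [G|G]; auto. nra.
Qed.

Definition zc k y := coord y k - coord x k.
Definition wc i y := ui i y - coord v i.
Definition zw y := sum3 (fun k => zc k y * wc k y).
Definition zu y := sum3 (fun k => zc k y * ui k y).
Definition zv y := sum3 (fun k => coord v k * zc k y).
Definition VV i y := zw y * wc i y + zu y * coord v i - zv y * ui i y.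
Definition Dzw j y := sum3 (fun k => (kd j k - 0) * wc k y + zc k y * (partial j (ui k) y - 0)).
Definition Dzu j y := sum3 (fun k => (kd j k - 0) * ui k y + zc k y * partial j (ui k) y).
Definition Dzv j y := sum3 (fun k => 0 * zc k y + coord v k * (kd j k - 0)).
Definition DVV i j y := Dzw j y * wc i y + zw y * (partial j (ui i) y - 0) + (Dzu j y * coord v i + zu y * 0)
   - (Dzv j y * ui i y + zv y * partial j (ui i) y).

Lemma CVV i : C1d Om (VV i) (DVV i).
Proof.
  assert (Czc : forall k, C1d Om (zc k) (fun j _ => kd j k - 0)).
  { intro k. exact (C1d_minus Om _ _ _ _ (C1d_coord Om k) (C1d_cst Om (coord x k))). }
  assert (Cwc : forall k, C1d Om (wc k) (fun j y => partial j (ui k) y - 0)).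
  { intro k. exact (C1d_minus Om _ _ _ _ (Cu k) (C1d_cst Om (coord v k))). }
  assert (Czw : C1d Om zw Dzw).
  { exact (C1d_sum3 Om (fun k y => zc k y * wc k y) _ (fun k => C1d_mult Om _ _ _ _ (Czc k) (Cwc k))). }
  assert (Czu : C1d Om zu Dzu).
  { exact (C1d_sum3 Om (fun k y => zc k y * ui k y) _ (fun k => C1d_mult Om _ _ _ _ (Czc k) (Cu k))). }
  assert (Czv : C1d Om zv Dzv).
  { exact (C1d_sum3 Om (fun k y => coord v k * zc k y) _ (fun k => C1d_mult Om _ _ _ _ (C1d_cst Om (coord v k)) (Czc k))). }
  exact (C1d_minus Om _ _ _ _ (C1d_plus Om _ _ _ _ (C1d_mult Om _ _ _ _ Czw (Cwc i)) (C1d_mult Om _ _ _ _ Czu (C1d_cst Om (coord v i))))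
     (C1d_mult Om _ _ _ _ Czv (Cu i))).
Qed.

Definition gW (xi : R3) := sum3 (fun i => coord xi i * sum3 (fun j => ui j (vadd x (vscale r xi)) * partial j (ui i) (vadd x (vscale r xi)))).
Definition wsq (xi : R3) := sum3 (fun i => (ui i (vadd x (vscale r xi)) - coord v i) * (ui i (vadd x (vscale r xi)) - coord v i)).

Lemma PW2 xi : sum3 (fun i => coord xi i * VV i (vadd x (vscale r xi))) = r * (Yf r xi * Yf r xi).
Proof.
  unfold VV, zw, zu, zv, zc, wc, Yf, sum3. rewrite !coord_line_gen. ring.
Qed.

Lemma PW1 xi : Om (vadd x (vscale r xi)) ->
  sum3 (fun i => DVV i i (vadd x (vscale r xi))) -
  sum3 (fun i => sum3 (fun j => coord xi i * coord xi j * DVV i j (vadd x (vscale r xi)))) =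
  wsq xi + r * gW xi - Yf r xi * Yf r xi - 2 * r * (Yf r xi * Zf r xi).
Proof.
  intro hP. assert (D := Hdiv _ hP). fold (ui I1) (ui I2) (ui I3) in D. unfold sum3 in D.
  assert (D3 : partial I3 (ui I3) (vadd x (vscale r xi)) =
     - partial I1 (ui I1) (vadd x (vscale r xi)) - partial I2 (ui I2) (vadd x (vscale r xi))) by (unfold ui; lra).
  unfold DVV, Dzw, Dzu, Dzv, zw, zu, zv, zc, wc, wsq, gW, Yf, Zf, sum3. cbv beta iota delta [kd].
  rewrite !coord_line_gen. rewrite D3. ring.
Qed.

Lemma main_sec :
  is_derive
    (fun s => sbar p x s
              + sph_avg (fun xi => (dot xi (vsub (u (vadd x (vscale s xi))) v)) ^ 2))
    r
    (- (1 / r) *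
       sph_avg (fun xi =>
         3 * (dot xi (vsub (u (vadd x (vscale r xi))) v)) ^ 2
         - nsq (vsub (u (vadd x (vscale r xi))) v))).
Proof.
  destruct ballR as [Rb [hRb HR]].
  assert (hr : Rabs r < Rb) by (rewrite Rabs_right; lra).
  assert (OmS : forall th ph, Om (vadd x (vscale r (sph th ph)))) by (intros; apply (OmP Rb HR); auto).
  assert (CHA : CS (HA r)) by (intros th ph; assert (H := OmS th ph); unfold HA, sum3; jtac2; auto).
  assert (CgW : CS gW) by (intros th ph; assert (H := OmS th ph); unfold gW, sum3; jtac2; auto).
  assert (CYZ : CS (fun xi => Yf r xi * Zf r xi)) by (intros th ph; assert (H := OmS th ph); unfold Yf, Zf, sum3; jtac2; auto).
  assert (CYY : CS (fun xi => Yf r xi * Yf r xi)) by (intros th ph; assert (H := OmS th ph); unfold Yf, sum3; jtac2; auto).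
  assert (Cwsq : CS wsq) by (intros th ph; assert (H := OmS th ph); unfold wsq, sum3; jtac2; auto).
  set (X1 := sph_avg (HA r)). set (X2 := sph_avg gW). set (X3 := sph_avg (fun xi => Yf r xi * Zf r xi)).
  set (X4 := sph_avg (fun xi => Yf r xi * Yf r xi)). set (X5 := sph_avg wsq).
  assert (E1' : X1 + X2 = 0).
  { rewrite <- E1. unfold X1, X2. rewrite <- avg_plus by auto. apply avg_ext. intros.
    unfold HA, gW, SU, U, sum3. ring. }
  assert (E2 : r * (X5 + r * X2 - X4 - 2 * r * X3) = 2 * (r * X4)).
  { assert (SL := sphere_lemma Om x r VV DVV HO).
    assert (Hin : forall th ph, Om (Pt x r th ph)) by (intros; unfold Pt; apply OmS).
    specialize (SL Hin CVV).
    rewrite (avg_ext _ (fun xi => wsq xi + r * gW xi - Yf r xi * Yf r xi - 2 * r * (Yf r xi * Zf r xi))) in SL.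
    2:{ intros th ph. apply PW1. apply OmS. }
    rewrite (avg_ext (fun xi => sum3 (fun i => coord xi i * VV i (vadd x (vscale r xi)))) (fun xi => r * (Yf r xi * Yf r xi))) in SL.
    2:{ intros th ph. apply PW2. }
    rewrite avg_scal in SL by auto.
    assert (CS1 : CS (fun xi => wsq xi + r * gW xi)) by (apply CS_plus; auto; apply CS_mult; auto; apply CS_cst).
    assert (CS2 : CS (fun xi => wsq xi + r * gW xi - Yf r xi * Yf r xi)) by (intros th ph; apply cont_minus; auto).
    rewrite avg_minus in SL; auto. 2: (apply CS_mult; auto; apply CS_cst).
    rewrite avg_minus in SL; auto.
    rewrite avg_plus in SL; auto. 2: (apply CS_mult; auto; apply CS_cst).
    rewrite (avg_scal r gW) in SL by auto. rewrite (avg_scal (2 * r)) in SL by auto.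
    fold X1 X2 X3 X4 X5 in SL. lra. }
  assert (VB : sph_avg (HB r) = 2 * X3).
  { unfold X3. rewrite <- avg_scal by auto. apply avg_ext. intros. unfold HB. ring. }
  assert (VT : sph_avg (fun xi => 3 * (dot xi (vsub (u (vadd x (vscale r xi))) v)) ^ 2
         - nsq (vsub (u (vadd x (vscale r xi))) v)) = 3 * X4 - X5).
  { rewrite (avg_ext _ (fun xi => 3 * (Yf r xi * Yf r xi) - wsq xi)).
    rewrite avg_minus; auto. rewrite avg_scal; auto. intros th ph; apply cont_mult; auto; apply cont_cst.
    intros th ph. unfold Yf, wsq, nsq, dot, ui, sum3. simpl. ring. }
  rewrite VT.
  apply (is_derive_ext (fun s => sph_avg (GA s) + sph_avg (GB s))).
  { intro s. unfold sbar. f_equal. apply avg_ext. intros. unfold GB, Yf, dot, ui, sum3. simpl. ring. }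
  replace (- (1 / r) * (3 * X4 - X5)) with (sph_avg (HA r) + sph_avg (HB r)).
  apply (derive_F Rb); auto.
  rewrite VB. fold X1.
  assert (E2' : X5 + r * X2 - X4 - 2 * r * X3 = 2 * X4).
  { apply Rmult_eq_reg_l with r. 2: lra. rewrite E2. ring. }
  assert (K : r * (X1 + 2 * X3) = X5 - 3 * X4).
  { replace X1 with (- X2) by lra. replace (r * (- X2 + 2 * X3)) with (- (r * X2) + 2 * r * X3) by ring. lra. }
  replace (X1 + 2 * X3) with ((X5 - 3 * X4) / r). field. lra.
  rewrite <- K. field. lra.
Qed.
End Main.

Theorem lemma1
  (Om : R3 -> Prop) (x : R3) (r : R)
  (u : R3 -> R3) (v : R3) (p : R3 -> R)
  (HOm : open Om)
  (Hx : Om x)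
  (Hr : 0 < r)
  (Hrd : forall y, boundary Om y -> r < edist x y)
  (Hu : forall i, C2_on Om (fun y => coord (u y) i))
  (Hdiv : forall y, Om y -> sum3 (fun i => partial i (fun z => coord (u z) i) y) = 0)
  (Hp : C2_on Om p)
  (Hpoisson : forall y, Om y ->
     - sum3 (fun i => partial i (partial i p) y)
     = sum3 (fun i => sum3 (fun j =>
         partial i (partial j (fun z => coord (u z) i * coord (u z) j)) y))) :
  is_derive
    (fun s => sbar p x s
              + sph_avg (fun xi => (dot xi (vsub (u (vadd x (vscale s xi))) v)) ^ 2))
    r
    (- (1 / r) *
       sph_avg (fun xi =>
         3 * (dot xi (vsub (u (vadd x (vscale r xi))) v)) ^ 2
         - nsq (vsub (u (vadd x (vscale r xi))) v))).
Proof.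
  intros. eapply main_sec; eauto.
Qed.
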